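(* Let $m\ge1$ and let $\phi\in C^\infty(\mathbb R^2)$ satisfy, for some $C>0$ and all $z\in\mathbb R^2$, $|D^3\phi(z)|\le C|z|^{2m-1}$, $|D^2\phi(z)|\le C|z|^{2m}$, $|D\phi(z)|\le C|z|^{2m+1}$. Let $\mathrm{epi}(\phi)=\{(z,t)\in\mathbb R^3:t>\phi(z)\}$. There exist constants $\varepsilon_0>0$ and $\lambda>0$ such that for every $z\in\mathbb R^2$ with $-XF(z)>\frac12|ZF(z)|$ and every $t$ with $(z,t)\in\mathrm{epi}(\phi)$, the curve $\gamma:[0,\infty)\to\mathbb R^3$, $$\gamma(s)=\begin{cases}e^{sX}(z,t), & 0\le s\le\bar s:=\varepsilon_0\dfrac{|ZF(z)|}{|z|^{2m}},\\[2mm] \gamma(\bar s)+(0,0,s-\bar s), & s\ge\bar s,\end{cases}$$ satisfies $\gamma([0,\infty))\subset\mathrm{epi}(\phi)$ and $B\big(\gamma(s),\lambda\operatorname{diam}(\gamma|_{[0,s]})\big)\subset\mathrm{epi}(\phi)$ for all $s>0$.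
   Context: Write points of $\mathbb R^3=\mathbb C\times\mathbb R$ as $(z,t)=(x,y,t)$. For a real parameter $m\ge1$ consider the vector fields $X=\partial_x+|z|^{2m}y\,\partial_t$ and $Y=\partial_y-|z|^{2m}x\,\partial_t$. An absolutely continuous curve $\gamma:[0,1]\to\mathbb R^3$ is horizontal if $\dot\gamma(s)=\alpha(s)X(\gamma(s))+\beta(s)Y(\gamma(s))$ for a.e. $s$, with length $\int_0^1|(\alpha(s),\beta(s))|\,ds$; the Carnot–Carathéodory distance $d(p,q)$ is the infimum of lengths of horizontal curves joining $p$ to $q$, $B(p,r)=\{q:d(p,q)<r\}$, and diameters are taken with respect to $d$. For $z=(x,y)$, $XF(z)=\phi_x(z)-|z|^{2m}y$, $YF(z)=\phi_y(z)+|z|^{2m}x$, $ZF(z)=(XF(z),YF(z))$ (note $ZF(z)\neq0$ forces $z\ne0$ under the hypotheses). $e^{sX}(z,t)$ denotes the point at time $s$ of the integral curve of $X$ starting at $(z,t)$; explicitly $e^{sX}(z,t)=(x+s,\,y,\,t+y\int_0^s|(x+\rho,y)|^{2m}d\rho)$. $|D^k\phi(z)|$ is the maximum of the absolute values of all $k$-th order partial derivatives of $\phi$ at $z$. *)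

(* Defs.v *)
From Stdlib Require Import Reals List.
Open Scope R_scope.

(* Points of R^3 = C x R, written ((x, y), t). *)
Definition pt : Type := (R * R * R)%type.
Definition px (p : pt) : R := fst (fst p).
Definition py (p : pt) : R := snd (fst p).
Definition pt3 (p : pt) : R := snd p.

(* Real power with the convention 0^a = 0 (used only with a > 0). *)
Definition rpow (x a : R) : R := if Rlt_dec 0 x then Rpower x a else 0.

Definition norm2 (x y : R) : R := sqrt (x * x + y * y).

Definition w2m (m x y : R) : R := rpow (norm2 x y) (2 * m).

Definition continuous2 (f : R -> R -> R) : Prop :=
  forall x0 y0 eps, 0 < eps -> exists delta, 0 < delta /\
    forall x y, norm2 (x - x0) (y - y0) < delta -> Rabs (f x y - f x0 y0) < eps.

(* phi is C^infinity on R^2 and D w is its iterated partial derivative along the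
   word w : false = d/dx, true = d/dy; D (b :: w) = d_b (D w), D nil = phi. *)
Definition smooth_family (phi : R -> R -> R) (D : list bool -> R -> R -> R) : Prop :=
  D nil = phi /\
  (forall w x y, derivable_pt_lim (fun u => D w u y) x (D (false :: w) x y)) /\
  (forall w x y, derivable_pt_lim (fun v => D w x v) y (D (true :: w) x y)) /\
  (forall w, continuous2 (D w)).

Definition XF (m : R) (D : list bool -> R -> R -> R) (x y : R) : R :=
  D (false :: nil) x y - w2m m x y * y.
Definition YF (m : R) (D : list bool -> R -> R -> R) (x y : R) : R :=
  D (true :: nil) x y + w2m m x y * x.
Definition normZF (m : R) (D : list bool -> R -> R -> R) (x y : R) : R :=
  norm2 (XF m D x y) (YF m D x y).

Definition epi (phi : R -> R -> R) (p : pt) : Prop := pt3 p > phi (px p) (py p).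

(* e^{sX}(p) : c is the integral curve of X = d_x + |z|^{2m} y d_t starting at p. *)
Definition integral_curve_X (m : R) (p : pt) (c : R -> pt) : Prop :=
  c 0 = p /\
  forall s,
    derivable_pt_lim (fun u => px (c u)) s 1 /\
    derivable_pt_lim (fun u => py (c u)) s 0 /\
    derivable_pt_lim (fun u => pt3 (c u)) s (w2m m (px (c s)) (py (c s)) * py (c s)).

Fixpoint ordered_intervals (a b : R) (l : list (R * R)) : Prop :=
  match l with
  | nil => a <= b
  | (u, v) :: l' => a <= u /\ u <= v /\ ordered_intervals v b l'
  end.

Fixpoint sum_len (l : list (R * R)) : R :=
  match l with nil => 0 | (u, v) :: l' => (v - u) + sum_len l' end.

Fixpoint sum_incr (f : R -> R) (l : list (R * R)) : R :=
  match l with nil => 0 | (u, v) :: l' => Rabs (f v - f u) + sum_incr f l' end.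

Definition abs_cont (f : R -> R) (a b : R) : Prop :=
  forall eps, 0 < eps -> exists delta, 0 < delta /\
    forall l, ordered_intervals a b l -> sum_len l < delta -> sum_incr f l < eps.

Definition null_set (N : R -> Prop) : Prop :=
  forall eps, 0 < eps -> exists c e : nat -> R,
    (forall n, c n <= e n) /\
    (forall s, N s -> exists n, c n < s < e n) /\
    (forall k, sum_f_R0 (fun n => e n - c n) k <= eps).

(* horizontal curve gamma : [0,1] -> R^3:
   absolutely continuous, and for a.e. s, gamma'(s) = alpha X(gamma s) + beta Y(gamma s),
   where X = d_x + |z|^{2m} y d_t, Y = d_y - |z|^{2m} x d_t. *)
Definition horizontal (m : R) (g : R -> pt) : Prop :=
  abs_cont (fun s => px (g s)) 0 1 /\
  abs_cont (fun s => py (g s)) 0 1 /\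
  abs_cont (fun s => pt3 (g s)) 0 1 /\
  exists N, null_set N /\
    forall s, 0 < s < 1 -> ~ N s ->
      exists alpha beta,
        derivable_pt_lim (fun u => px (g u)) s alpha /\
        derivable_pt_lim (fun u => py (g u)) s beta /\
        derivable_pt_lim (fun u => pt3 (g u)) s
          (w2m m (px (g s)) (py (g s)) * (alpha * py (g s) - beta * px (g s))).

(* partitions 0 = s_0 <= s_1 <= ... <= s_k = 1, as the list [s_1; ...; s_k] *)
Fixpoint partition_from (a : R) (l : list R) : Prop :=
  match l with
  | nil => a = 1
  | s :: l' => a <= s /\ partition_from s l'
  end.

Fixpoint poly_len (g : R -> pt) (a : R) (l : list R) : R :=
  match l with
  | nil => 0
  | s :: l' => norm2 (px (g s) - px (g a)) (py (g s) - py (g a)) + poly_len g s l'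
  end.

(* "length(gamma) <= L": the length of a horizontal curve is int_0^1 |(alpha,beta)|,
   which for an absolutely continuous curve equals the total variation of its
   projection s |-> (x(s),y(s)). *)
Definition length_le (g : R -> pt) (L : R) : Prop :=
  forall l, partition_from 0 l -> poly_len g 0 l <= L.

Definition hcurve (m : R) (p q : pt) (g : R -> pt) : Prop :=
  horizontal m g /\ g 0 = p /\ g 1 = q.

Definition cc_dist_lt (m : R) (p q : pt) (r : R) : Prop :=
  exists g L, hcurve m p q g /\ length_le g L /\ L < r.

(* d(p,q) > r  (d may be +infinity) *)
Definition cc_dist_gt (m : R) (p q : pt) (r : R) : Prop :=
  exists r', r < r' /\
    forall g, hcurve m p q g -> forall L, length_le g L -> r' <= L.

Definition diam_gt (m : R) (S : pt -> Prop) (r : R) : Prop :=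
  exists a b, S a /\ S b /\ cc_dist_gt m a b r.

(* q in B(p, lam * diam S) = { q : d(p,q) < lam * diam S }, lam > 0 *)
Definition in_ball_diam (m : R) (p : pt) (lam : R) (S : pt -> Prop) (q : pt) : Prop :=
  exists r, cc_dist_lt m p q r /\ diam_gt m S (r / lam).

Definition gamma_curve (c : R -> pt) (sbar : R) (s : R) : pt :=
  if Rle_dec s sbar then c s
  else (px (c sbar), py (c sbar), pt3 (c sbar) + (s - sbar)).

(* Main.v *)
Require Import Defs.
From Stdlib Require Import Reals List.
From Stdlib Require Import Lra Psatz Classical ClassicalDescription.
Require Import Defs.
Open Scope R_scope.

Lemma norm2_ge0 a b : 0 <= norm2 a b.
Proof. unfold norm2; apply sqrt_pos. Qed.

Lemma norm2_sq a b : norm2 a b * norm2 a b = a*a + b*b.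
Proof. unfold norm2; rewrite sqrt_sqrt; nra. Qed.

Lemma norm2_le_of_sq a b c : 0 <= c -> a*a + b*b <= c*c -> norm2 a b <= c.
Proof.
  intros Hc H. unfold norm2. rewrite <- (sqrt_square c) by lra.
  apply sqrt_le_1_alt. nra.
Qed.

Lemma sq_le_le x y : 0 <= y -> x*x <= y*y -> x <= y.
Proof. intros. nra. Qed.

Lemma abs_sq a : Rabs a * Rabs a = a * a.
Proof. rewrite <- Rabs_mult. apply Rabs_right. nra. Qed.

Lemma norm2_abs1 a b : Rabs a <= norm2 a b.
Proof.
  pose proof (norm2_sq a b). pose proof (norm2_ge0 a b).
  apply sq_le_le; auto. rewrite abs_sq. nra.
Qed.

Lemma norm2_abs2 a b : Rabs b <= norm2 a b.
Proof.
  pose proof (norm2_sq a b). pose proof (norm2_ge0 a b).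
  apply sq_le_le; auto. rewrite abs_sq. nra.
Qed.

Lemma norm2_le_sum a b : norm2 a b <= Rabs a + Rabs b.
Proof.
  apply norm2_le_of_sq. pose proof (Rabs_pos a); pose proof (Rabs_pos b); lra.
  pose proof (Rabs_pos a); pose proof (Rabs_pos b).
  rewrite <- (abs_sq a), <- (abs_sq b). nra.
Qed.

Lemma cauchy_schwarz a b c d : a*c + b*d <= norm2 a b * norm2 c d.
Proof.
  pose proof (norm2_sq a b); pose proof (norm2_sq c d).
  pose proof (norm2_ge0 a b); pose proof (norm2_ge0 c d).
  destruct (Rle_dec (a*c+b*d) 0). nra.
  apply sq_le_le. nra.
  replace (norm2 a b * norm2 c d * (norm2 a b * norm2 c d)) with
    ((norm2 a b * norm2 a b) * (norm2 c d * norm2 c d)) by ring.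
  rewrite H, H0. pose proof (Rle_0_sqr (a*d - b*c)). unfold Rsqr in *. nra.
Qed.

Lemma cauchy_schwarz_abs a b c d : Rabs (a*c + b*d) <= norm2 a b * norm2 c d.
Proof.
  apply Rabs_le; split.
  - pose proof (cauchy_schwarz (-a) (-b) c d).
    unfold norm2 in *. replace (-a * - a) with (a*a) in H by ring.
    replace (-b * - b) with (b*b) in H by ring. lra.
  - apply cauchy_schwarz.
Qed.

Lemma norm2_triangle a b c d : norm2 (a+c) (b+d) <= norm2 a b + norm2 c d.
Proof.
  apply norm2_le_of_sq. pose proof (norm2_ge0 a b); pose proof (norm2_ge0 c d); lra.
  pose proof (norm2_sq a b); pose proof (norm2_sq c d).
  pose proof (cauchy_schwarz a b c d). nra.
Qed.

Lemma norm2_opp a b : norm2 (-a) (-b) = norm2 a b.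
Proof. unfold norm2; f_equal; ring. Qed.

Lemma norm2_sub_sym a b c d : norm2 (a - c) (b - d) = norm2 (c - a) (d - b).
Proof. unfold norm2; f_equal; ring. Qed.

Lemma norm2_scale k a b : norm2 (k*a) (k*b) = Rabs k * norm2 a b.
Proof.
  unfold norm2. replace (k*a*(k*a) + k*b*(k*b)) with ((k*k) * (a*a+b*b)) by ring.
  rewrite sqrt_mult_alt by nra. f_equal.
  replace (k*k) with (Rsqr k) by reflexivity. rewrite sqrt_Rsqr_abs. reflexivity.
Qed.

Lemma norm2_tri3 a b c d e f :
  norm2 (a - e) (b - f) <= norm2 (a - c) (b - d) + norm2 (c - e) (d - f).
Proof.
  replace (a - e) with ((a - c) + (c - e)) by ring.
  replace (b - f) with ((b - d) + (d - f)) by ring. apply norm2_triangle.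
Qed.

Lemma norm2_rev_tri a b c d : Rabs (norm2 a b - norm2 c d) <= norm2 (a - c) (b - d).
Proof.
  apply Rabs_le; split.
  - pose proof (norm2_tri3 c d a b 0 0). rewrite !Rminus_0_r in H.
    rewrite norm2_sub_sym in H. lra.
  - pose proof (norm2_tri3 a b c d 0 0). rewrite !Rminus_0_r in H. lra.
Qed.

Lemma norm2_pos a b : norm2 a b > 0 -> a <> 0 \/ b <> 0.
Proof.
  intros H. destruct (Req_dec a 0); destruct (Req_dec b 0); auto.
  subst. unfold norm2 in H. replace (0*0+0*0) with 0 in H by ring. rewrite sqrt_0 in H. lra.
Qed.

Lemma norm2_00 : norm2 0 0 = 0.
Proof. unfold norm2. replace (0*0+0*0) with 0 by ring. apply sqrt_0. Qed.

Lemma rpow_ge0 r e : 0 <= rpow r e.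
Proof. unfold rpow. destruct (Rlt_dec 0 r). left; apply exp_pos. lra. Qed.

Lemma rpow_pos r e : 0 < r -> 0 < rpow r e.
Proof. intros. unfold rpow. destruct (Rlt_dec 0 r). apply exp_pos. lra. Qed.

Lemma rpow_0 e : rpow 0 e = 0.
Proof. unfold rpow. destruct (Rlt_dec 0 0); lra. Qed.

Lemma rpow_eq r e : 0 < r -> rpow r e = Rpower r e.
Proof. intros. unfold rpow. destruct (Rlt_dec 0 r); lra. Qed.

Lemma rpow_mono r1 r2 e : 0 <= e -> 0 <= r1 <= r2 -> rpow r1 e <= rpow r2 e.
Proof.
  intros He [H1 H2]. destruct (Req_dec r1 0).
  - subst. rewrite rpow_0. apply rpow_ge0.
  - rewrite !rpow_eq by lra. apply Rle_Rpower_l; lra.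
Qed.

Lemma rpow_mul a b e : 0 <= a -> 0 <= b -> rpow (a*b) e = rpow a e * rpow b e.
Proof.
  intros Ha Hb. destruct (Req_dec a 0). subst. rewrite Rmult_0_l, rpow_0; ring.
  destruct (Req_dec b 0). subst. rewrite Rmult_0_r, rpow_0; ring.
  rewrite !rpow_eq by nra. rewrite Rpower_mult_distr by lra. reflexivity.
Qed.

Lemma rpow_plus1 r e : 0 <= r -> rpow r (e + 1) = rpow r e * r.
Proof.
  intros Hr. destruct (Req_dec r 0). subst. rewrite !rpow_0; ring.
  rewrite !rpow_eq by lra. rewrite Rpower_plus, Rpower_1 by lra. reflexivity.
Qed.

Lemma rpow_1 r : 0 <= r -> rpow r 1 = r.
Proof. intros. destruct (Req_dec r 0). subst; apply rpow_0. rewrite rpow_eq by lra. apply Rpower_1; lra. Qed.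


Fixpoint chain (Q : R -> R -> Prop) (a : R) (l : list R) (b : R) : Prop :=
  match l with
  | nil => a = b
  | s :: l' => a <= s /\ Q a s /\ chain Q s l' b
  end.

Lemma chain_app Q a l b c : chain Q a l b -> b <= c -> Q b c -> chain Q a (l ++ c :: nil) c.
Proof.
  revert a. induction l as [|s l IH]; intros a H Hbc HQ; simpl in *.
  - subst. repeat split; auto.
  - destruct H as [H1 [H2 H3]]. repeat split; auto.
Qed.

Lemma chain_le Q a l b : chain Q a l b -> a <= b.
Proof.
  revert a; induction l; simpl; intros. lra. destruct H as [? [? ?]]. specialize (IHl _ H1). lra.
Qed.

Definition fine (G : R -> R -> Prop) (u v : R) : Prop :=
  exists t d, (t = u \/ t = v) /\ G t d /\ v - u < d.

Lemma cousin (G : R -> R -> Prop) :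
  (forall s, 0 <= s <= 1 -> exists d, 0 < d /\ G s d) ->
  exists l, chain (fine G) 0 l 1.
Proof.
  intros HG.
  set (E := fun b => 0 <= b <= 1 /\ exists l, chain (fine G) 0 l b).
  assert (Hb : bound E) by (exists 1; intros x [Hx _]; lra).
  assert (He : exists x, E x) by (exists 0; split; [lra| exists nil; simpl; auto]).
  destruct (completeness E Hb He) as [sg [Hub Hlub]].
  assert (H0 : 0 <= sg) by (apply Hub; split; [lra| exists nil; simpl; auto]).
  assert (H1 : sg <= 1) by (apply Hlub; intros x [Hx _]; lra).
  destruct (HG sg (conj H0 H1)) as [d [Hd HGd]].
  assert (Hex : exists b, E b /\ sg - d < b).
  { apply NNPP; intro Hn.
    assert (sg <= sg - d); [|lra].
    apply Hlub. intros x Ex. apply Rnot_lt_le. intro Hlt. apply Hn. exists x; auto. }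
  destruct Hex as [b [[Hb01 [l Hl]] Hbd]].
  assert (Hbs : b <= sg) by (apply Hub; split; auto; exists l; auto).
  assert (Hsg : chain (fine G) 0 (l ++ sg :: nil) sg).
  { apply chain_app with b; auto. exists sg, d. repeat split; auto. lra. }
  destruct (Rle_lt_or_eq_dec sg 1 H1) as [Hlt|Heq].
  - exfalso. set (c := Rmin 1 (sg + d/2)).
    assert (Hc : E c).
    { split. unfold c; split. apply Rmin_glb; lra. apply Rmin_l.
      exists ((l ++ sg :: nil) ++ c :: nil). apply chain_app with sg; auto.
      unfold c. apply Rmin_glb; lra.
      exists sg, d. repeat split; auto. unfold c. pose proof (Rmin_r 1 (sg + d/2)). lra. }
    pose proof (Hub c Hc). unfold c in H. unfold Rmin in H. destruct (Rle_dec 1 (sg + d/2)); lra.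
  - subst. exists (l ++ 1 :: nil). exact Hsg.
Qed.

Definition sumP (h : R * R -> R) (l : list (R * R)) : R :=
  fold_right (fun p acc => h p + acc) 0 l.

Lemma sumP_cons h p l : sumP h (p :: l) = h p + sumP h l.
Proof. reflexivity. Qed.

Lemma sum_len_sumP l : sum_len l = sumP (fun p => snd p - fst p) l.
Proof. induction l as [|[u v] l IH]; simpl; auto. rewrite IH; reflexivity. Qed.

Lemma sum_incr_sumP f l : sum_incr f l = sumP (fun p => Rabs (f (snd p) - f (fst p))) l.
Proof. induction l as [|[u v] l IH]; simpl; auto. rewrite IH; reflexivity. Qed.

Lemma sumP_filter h (q : R * R -> bool) l :
  sumP h l = sumP h (filter q l) + sumP h (filter (fun p => negb (q p)) l).
Proof.
  induction l as [|p l IH]; simpl. unfold sumP; simpl; ring.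
  destruct (q p); simpl; rewrite IH; unfold sumP; simpl; ring.
Qed.

Lemma sumP_le h1 h2 l : (forall p, In p l -> h1 p <= h2 p) -> sumP h1 l <= sumP h2 l.
Proof.
  induction l as [|p l IH]; intros H; simpl. unfold sumP; simpl; lra.
  unfold sumP in *; simpl. pose proof (H p (or_introl eq_refl)).
  assert (sumP h1 l <= sumP h2 l) by (apply IH; intros; apply H; right; auto).
  unfold sumP in H1. lra.
Qed.

Lemma sumP_ge0 h l : (forall p, In p l -> 0 <= h p) -> 0 <= sumP h l.
Proof.
  intros H. replace 0 with (sumP (fun _ => 0) l). apply sumP_le; auto.
  induction l; simpl; auto. unfold sumP in *; simpl in *. rewrite IHl; auto. ring.
Qed.

Lemma sumP_filter_le h q l : (forall p, In p l -> 0 <= h p) -> sumP h (filter q l) <= sumP h l.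
Proof.
  intros H. rewrite (sumP_filter h q l).
  assert (0 <= sumP h (filter (fun p => negb (q p)) l)).
  { apply sumP_ge0. intros p Hp. apply filter_In in Hp. apply H; tauto. }
  lra.
Qed.

Lemma sumP_plus h1 h2 l : sumP (fun p => h1 p + h2 p) l = sumP h1 l + sumP h2 l.
Proof. induction l; unfold sumP in *; simpl; auto. lra. rewrite IHl. ring. Qed.

Lemma sumP_scal k h l : sumP (fun p => k * h p) l = k * sumP h l.
Proof. induction l; unfold sumP in *; simpl; auto. lra. rewrite IHl. ring. Qed.

Lemma ordered_mono a a' b l : ordered_intervals a b l -> a' <= a -> ordered_intervals a' b l.
Proof. destruct l as [|[u v] l]; simpl; intros; try lra. destruct H as [? [? ?]]; repeat split; auto; lra. Qed.

Lemma ordered_filter a b l q : ordered_intervals a b l -> ordered_intervals a b (filter q l).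
Proof.
  revert a. induction l as [|[u v] l IH]; intros a H; simpl in *; auto.
  destruct H as [H1 [H2 H3]].
  destruct (q (u, v)); simpl.
  - repeat split; auto.
  - apply ordered_mono with v; auto. lra.
Qed.

Lemma ordered_single a b l e : ordered_intervals a b l -> (forall p, In p l -> snd p <= e) ->
  sum_len l <= Rmax 0 (e - a).
Proof.
  revert a. induction l as [|[u v] l IH]; intros a H He; simpl in *.
  - apply Rmax_l.
  - destruct H as [H1 [H2 H3]].
    assert (Hv : v <= e) by (apply (He (u,v)); auto).
    pose proof (IH v H3 (fun p Hp => He p (or_intror Hp))).
    rewrite Rmax_right in H by lra. rewrite Rmax_right by lra. lra.
Qed.

Lemma ordered_inside a b l c e : c <= e -> ordered_intervals a b l ->
  (forall p, In p l -> c <= fst p /\ snd p <= e) -> sum_len l <= e - c.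
Proof.
  intros Hce H Hin. destruct l as [|[u v] l]. simpl; lra.
  assert (H' : ordered_intervals u b ((u,v)::l)) by (simpl in *; destruct H as [? [? ?]]; repeat split; auto; lra).
  pose proof (ordered_single u b _ e H' (fun p Hp => proj2 (Hin p Hp))).
  destruct (Hin (u,v) (or_introl eq_refl)) as [Hcu _]. simpl in Hcu.
  rewrite Rmax_right in H0. lra. simpl in H. destruct (Hin (u,v) (or_introl eq_refl)). simpl in *. lra.
Qed.

Definition inside (c e : nat -> R) (n : nat) (p : R * R) : Prop := c n <= fst p /\ snd p <= e n.

Definition insideb (c e : nat -> R) (n : nat) (p : R * R) : bool :=
  if excluded_middle_informative (inside c e n p) then true else false.

Lemma group_K (c e : nat -> R) : (forall n, c n <= e n) -> forall K l a b,
  ordered_intervals a b l ->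
  (forall p, In p l -> exists n, (n <= K)%nat /\ inside c e n p) ->
  sum_len l <= sum_f_R0 (fun n => e n - c n) K.
Proof.
  intros Hce. induction K as [|K IH]; intros l a b Hl Hin; simpl.
  - apply ordered_inside with a b; auto.
    intros p Hp. destruct (Hin p Hp) as [n [Hn Hi]]. assert (n = 0%nat) by lia. subst. exact Hi.
  - rewrite !sum_len_sumP. rewrite (sumP_filter _ (insideb c e (S K)) l).
    rewrite <- !sum_len_sumP.
    assert (A1 : sum_len (filter (insideb c e (S K)) l) <= e (S K) - c (S K)).
    { apply ordered_inside with a b; auto. apply ordered_filter; auto.
      intros p Hp. apply filter_In in Hp. destruct Hp as [_ Hp]. unfold insideb in Hp.
      destruct (excluded_middle_informative (inside c e (S K) p)); auto. discriminate. }
    assert (A2 : sum_len (filter (fun p => negb (insideb c e (S K) p)) l) <= sum_f_R0 (fun n => e n - c n) K).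
    { apply IH with a b. apply ordered_filter; auto.
      intros p Hp. apply filter_In in Hp. destruct Hp as [Hp Hq]. unfold insideb in Hq.
      destruct (excluded_middle_informative (inside c e (S K) p)); try discriminate.
      destruct (Hin p Hp) as [n0 [Hn Hi]]. exists n0. split; auto.
      destruct (Nat.eq_dec n0 (S K)). subst; contradiction. lia. }
    lra.
Qed.

Lemma group_bound (c e : nat -> R) l :
  (forall p, In p l -> exists n, inside c e n p) ->
  exists K, forall p, In p l -> exists n, (n <= K)%nat /\ inside c e n p.
Proof.
  induction l as [|p l IH]; intros H.
  - exists 0%nat. intros p Hp; inversion Hp.
  - destruct IH as [K HK]. intros q Hq; apply H; right; auto.
    destruct (H p (or_introl eq_refl)) as [n0 Hn].
    exists (Nat.max n0 K). intros q [Hq|Hq].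
    + subst. exists n0. split; auto. lia.
    + destruct (HK q Hq) as [n' [Hn' Hi]]. exists n'. split; auto. lia.
Qed.

Fixpoint steps (a : R) (l : list R) : list (R * R) :=
  match l with nil => nil | s :: l' => (a, s) :: steps s l' end.

Lemma steps_ordered Q a l b : chain Q a l b -> ordered_intervals a b (steps a l).
Proof.
  revert a. induction l as [|s l IH]; intros a H; simpl in *. lra.
  destruct H as [H1 [H2 H3]]. repeat split; auto. lra.
Qed.

Lemma steps_In Q a l b p : chain Q a l b -> In p (steps a l) ->
  Q (fst p) (snd p) /\ a <= fst p /\ fst p <= snd p /\ snd p <= b.
Proof.
  revert a. induction l as [|s l IH]; intros a H Hp; simpl in *. contradiction.
  destruct H as [H1 [H2 H3]]. destruct Hp as [Hp|Hp].
  - subst; simpl. pose proof (chain_le _ _ _ _ H3). repeat split; auto. lra.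
  - destruct (IH s H3 Hp) as [? [? [? ?]]]. repeat split; auto; lra.
Qed.

Lemma steps_incr Q f a l b : chain Q a l b ->
  Rabs (f b - f a) <= sumP (fun p => Rabs (f (snd p) - f (fst p))) (steps a l).
Proof.
  revert a. induction l as [|s l IH]; intros a H; simpl in *.
  - subst. unfold sumP; simpl. replace (f b - f b) with 0 by ring. rewrite Rabs_R0; lra.
  - destruct H as [H1 [H2 H3]]. specialize (IH s H3). unfold sumP in *; simpl.
    replace (f b - f a) with ((f s - f a) + (f b - f s)) by ring.
    pose proof (Rabs_triang (f s - f a) (f b - f s)). lra.
Qed.

Lemma steps_len Q a l b : chain Q a l b -> sumP (fun p => snd p - fst p) (steps a l) = b - a.
Proof.
  revert a. induction l as [|s l IH]; intros a H; simpl in *.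
  - subst. unfold sumP; simpl; ring.
  - destruct H as [H1 [H2 H3]]. specialize (IH s H3). unfold sumP in *; simpl. rewrite IH. ring.
Qed.

Lemma steps_poly (g : R -> pt) Q a l b : chain Q a l b ->
  poly_len g a l = sumP (fun p => norm2 (px (g (snd p)) - px (g (fst p))) (py (g (snd p)) - py (g (fst p)))) (steps a l).
Proof.
  revert a. induction l as [|s l IH]; intros a H; simpl in *. reflexivity.
  destruct H as [H1 [H2 H3]]. rewrite (IH s H3). reflexivity.
Qed.

Lemma chain_partition Q l a : chain Q a l 1 -> partition_from a l.
Proof.
  revert a. induction l as [|s l IH]; intros a H; simpl in *. auto.
  destruct H as [H1 [H2 H3]]. split; auto.
Qed.

Definition cext (c : nat -> R) (w : R) (n : nat) : R :=
  match n with O => - w | S O => 1 - w | S (S k) => c k end.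
Definition eext (e : nat -> R) (w : R) (n : nat) : R :=
  match n with O => w | S O => 1 + w | S (S k) => e k end.

Lemma ext_sum c e w K :
  sum_f_R0 (fun n => eext e w n - cext c w n) (S (S K)) =
  4 * w + sum_f_R0 (fun n => e n - c n) K.
Proof.
  induction K. simpl. ring.
  replace (S (S (S K))) with (S (S (S K))) by reflexivity.
  rewrite tech5. rewrite IHK. simpl. ring.
Qed.

Lemma ext_sum_le c e w eps K : 0 <= w -> (forall n, c n <= e n) ->
  (forall k, sum_f_R0 (fun n => e n - c n) k <= eps) ->
  sum_f_R0 (fun n => eext e w n - cext c w n) K <= 4 * w + eps.
Proof.
  intros Hw Hce Hs. destruct K as [|[|K]].
  - simpl. pose proof (Hs 0%nat). simpl in H. pose proof (Hce 0%nat). lra.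
  - simpl. pose proof (Hs 0%nat). simpl in H. pose proof (Hce 0%nat). lra.
  - rewrite ext_sum. pose proof (Hs K). lra.
Qed.

Lemma lemmaA (g : R -> pt) (F : R -> R) (M L : R) :
  0 <= M -> abs_cont F 0 1 ->
  (exists N, null_set N /\ forall s, 0 < s < 1 -> ~ N s -> forall eps, 0 < eps ->
     exists d, 0 < d /\ forall s', 0 <= s' <= 1 -> Rabs (s' - s) < d ->
       Rabs (F s' - F s) <= M * norm2 (px (g s') - px (g s)) (py (g s') - py (g s)) + eps * Rabs (s' - s)) ->
  length_le g L -> Rabs (F 1 - F 0) <= M * L.
Proof.
  intros HM HAC [N [HN Hloc]] HL.
  apply le_epsilon. intros eps Heps.
  set (eta := eps / 2).
  assert (Heta : 0 < eta) by (unfold eta; lra).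
  destruct (HAC eta Heta) as [dA [HdA HAC']].
  destruct (HN (dA / 4) ltac:(lra)) as [c [e [Hce [Hcov Hsum]]]].
  set (w := dA / 16).
  set (c' := cext c w). set (e' := eext e w).
  set (Gg := fun t d => 0 < t < 1 /\ ~ N t /\ forall s', 0 <= s' <= 1 -> Rabs (s' - t) < d ->
       Rabs (F s' - F t) <= M * norm2 (px (g s') - px (g t)) (py (g s') - py (g t)) + eta * Rabs (s' - t)).
  set (G := fun t d => Gg t d \/ exists n, c' n <= t - d /\ t + d <= e' n).
  assert (HG : forall s, 0 <= s <= 1 -> exists d, 0 < d /\ G s d).
  { intros s Hs. destruct (classic (0 < s < 1 /\ ~ N s)) as [Hg|Hb].
    - destruct Hg as [Hg1 Hg2]. destruct (Hloc s Hg1 Hg2 eta Heta) as [d [Hd Hd']].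
      exists d. split; auto. left. repeat split; auto; tauto.
    - assert (s = 0 \/ s = 1 \/ N s).
      { destruct (Req_dec s 0); auto. destruct (Req_dec s 1); auto. right; right.
        apply NNPP. intro. apply Hb. split; auto. lra. }
      destruct H as [H|[H|H]].
      + exists w. split. unfold w; lra. right. exists 0%nat. unfold c', e', cext, eext; simpl. lra.
      + exists w. split. unfold w; lra. right. exists 1%nat. unfold c', e', cext, eext; simpl. lra.
      + destruct (Hcov s H) as [n Hn]. exists (Rmin (s - c n) (e n - s)). split.
        apply Rmin_glb_lt; lra. right. exists (S (S n)). unfold c', e', cext, eext.
        pose proof (Rmin_l (s - c n) (e n - s)). pose proof (Rmin_r (s - c n) (e n - s)). lra. }
  destruct (cousin G HG) as [l Hl].
  set (st := steps 0 l).
  set (goodP := fun p : R * R => exists t d, (t = fst p \/ t = snd p) /\ Gg t d /\ snd p - fst p < d).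
  set (gb := fun p => if excluded_middle_informative (goodP p) then true else false).
  pose proof (steps_incr _ F 0 l 1 Hl) as Hincr. fold st in Hincr.
  rewrite (sumP_filter _ gb st) in Hincr.
  assert (Hbad : sumP (fun p => Rabs (F (snd p) - F (fst p))) (filter (fun p => negb (gb p)) st) < eta).
  { rewrite <- sum_incr_sumP. apply HAC'.
    apply ordered_filter. apply (steps_ordered _ _ _ _ Hl).
    assert (Hin : forall p, In p (filter (fun p => negb (gb p)) st) -> exists n, inside c' e' n p).
    { intros p Hp. apply filter_In in Hp. destruct Hp as [Hp Hq].
      destruct (steps_In _ _ _ _ _ Hl Hp) as [[t [d [Ht [HGt Hd]]]] [H0 [H1 H2]]].
      unfold gb in Hq. destruct (excluded_middle_informative (goodP p)) as [Hgp|Hgp]; [discriminate|].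
      destruct HGt as [HGt|[n Hn]].
      - exfalso. apply Hgp. exists t, d. auto.
      - exists n. unfold inside. destruct Hn. destruct Ht; subst; split; lra. }
    destruct (group_bound _ _ _ Hin) as [K HK].
    pose proof (group_K c' e' ltac:(intros n; unfold c', e', cext, eext; destruct n as [|[|n]]; try (unfold w; lra); apply Hce)
      K _ 0 1 (ordered_filter _ _ _ _ (steps_ordered _ _ _ _ Hl)) HK).
    pose proof (ext_sum_le c e w (dA/4) K ltac:(unfold w; lra) Hce Hsum). fold c' e' in H0.
    unfold c', e' in *. assert (4 * w + dA/4 < dA) by (unfold w; lra). unfold st. lra. }
  assert (Hgood : sumP (fun p => Rabs (F (snd p) - F (fst p))) (filter gb st) <=
     M * sumP (fun p => norm2 (px (g (snd p)) - px (g (fst p))) (py (g (snd p)) - py (g (fst p)))) st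
     + eta * sumP (fun p => snd p - fst p) st).
  { eapply Rle_trans.
    apply sumP_le with (h2 := fun p => M * norm2 (px (g (snd p)) - px (g (fst p))) (py (g (snd p)) - py (g (fst p)))
       + eta * (snd p - fst p)).
    - intros p Hp. apply filter_In in Hp. destruct Hp as [Hp Hq].
      destruct (steps_In _ _ _ _ _ Hl Hp) as [_ [H0 [H1 H2]]].
      unfold gb in Hq. destruct (excluded_middle_informative (goodP p)) as [Hgp|Hgp]; [|discriminate].
      destruct Hgp as [t [d [Ht [[_ [_ HGt]] Hd]]]].
      destruct Ht as [Ht|Ht]; subst t.
      + specialize (HGt (snd p) ltac:(split; lra) ltac:(rewrite Rabs_right; lra)).
        rewrite (Rabs_right (snd p - fst p)) in HGt by lra. exact HGt.
      + specialize (HGt (fst p) ltac:(split; lra) ltac:(rewrite Rabs_left1; lra)).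
        rewrite (Rabs_left1 (fst p - snd p)) in HGt by lra. rewrite Rabs_minus_sym, norm2_sub_sym. lra.
    - rewrite sumP_plus, !sumP_scal.
      assert (A1 : sumP (fun p => norm2 (px (g (snd p)) - px (g (fst p))) (py (g (snd p)) - py (g (fst p)))) (filter gb st)
         <= sumP (fun p => norm2 (px (g (snd p)) - px (g (fst p))) (py (g (snd p)) - py (g (fst p)))) st).
      { apply sumP_filter_le. intros; apply norm2_ge0. }
      assert (A2 : sumP (fun p => snd p - fst p) (filter gb st) <= sumP (fun p => snd p - fst p) st).
      { apply sumP_filter_le. intros p Hp. destruct (steps_In _ _ _ _ _ Hl Hp) as [_ [? [? ?]]]. lra. }
      apply Rplus_le_compat; apply Rmult_le_compat_l; lra. }
  unfold st in Hgood. rewrite <- (steps_poly g _ 0 l 1 Hl) in Hgood.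
  rewrite (steps_len _ 0 l 1 Hl) in Hgood.
  pose proof (HL l (chain_partition _ _ _ Hl)).
  assert (M * poly_len g 0 l <= M * L) by (apply Rmult_le_compat_l; auto).
  unfold st in *. clear -Hincr Hbad Hgood H H0 Heps. unfold eta in *. lra.
Qed.

Definition lipz (g : R -> pt) (K : R) : Prop :=
  forall u v, 0 <= u <= 1 -> 0 <= v <= 1 ->
    norm2 (px (g v) - px (g u)) (py (g v) - py (g u)) <= K * Rabs (v - u).
Definition lipt (g : R -> pt) : Prop :=
  exists Kt, forall u v, 0 <= u <= 1 -> 0 <= v <= 1 ->
    Rabs (pt3 (g v) - pt3 (g u)) <= Kt * Rabs (v - u).
Definition hrel (m : R) (g : R -> pt) (s : R) : Prop :=
  exists alpha beta,
    derivable_pt_lim (fun u => px (g u)) s alpha /\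
    derivable_pt_lim (fun u => py (g u)) s beta /\
    derivable_pt_lim (fun u => pt3 (g u)) s
      (w2m m (px (g s)) (py (g s)) * (alpha * py (g s) - beta * px (g s))).
Definition nice (m : R) (g : R -> pt) (K : R) (bad : list R) : Prop :=
  lipz g K /\ lipt g /\ forall s, 0 < s < 1 -> ~ In s bad -> hrel m g s.



Lemma ordered_le a b l : ordered_intervals a b l -> a <= b.
Proof.
  revert a. induction l as [|[u v] l IH]; intros a H; simpl in *. auto.
  destruct H as [H1 [H2 H3]]. specialize (IH v H3). lra.
Qed.

Lemma ordered_In a b l p : ordered_intervals a b l -> In p l -> a <= fst p /\ fst p <= snd p /\ snd p <= b.
Proof.
  revert a. induction l as [|[u v] l IH]; intros a H Hp; simpl in *. contradiction.
  destruct H as [H1 [H2 H3]]. destruct Hp as [Hp|Hp].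
  - subst; simpl. pose proof (ordered_le _ _ _ H3). lra.
  - destruct (IH v H3 Hp); lra.
Qed.

Lemma lip_abs_cont f K : 0 <= K ->
  (forall u v, 0 <= u <= 1 -> 0 <= v <= 1 -> Rabs (f v - f u) <= K * Rabs (v - u)) ->
  abs_cont f 0 1.
Proof.
  intros HK Hf eps Heps. exists (eps / (K + 1)). split. apply Rdiv_lt_0_compat; lra.
  intros l Hl Hs.
  assert (sum_incr f l <= K * sum_len l).
  { rewrite sum_incr_sumP, sum_len_sumP, <- sumP_scal. apply sumP_le.
    intros p Hp. destruct (ordered_In _ _ _ _ Hl Hp) as [? [? ?]].
    rewrite <- (Rabs_right (snd p - fst p)) by lra. apply Hf; lra. }
  assert (0 <= sum_len l).
  { rewrite sum_len_sumP. apply sumP_ge0. intros p Hp. destruct (ordered_In _ _ _ _ Hl Hp) as [? [? ?]]. lra. }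
  assert (sum_len l * (K+1) < eps).
  { apply Rmult_lt_reg_r with (/ (K+1)). apply Rinv_0_lt_compat; lra.
    rewrite Rmult_assoc, Rinv_r, Rmult_1_r by lra. exact Hs. }
  nra.
Qed.

Lemma sum_f_R0_ind_le (f : nat -> R) (w : R) (n : nat) K :
  0 <= w -> (forall k, (k < n)%nat -> f k <= w) -> (forall k, (n <= k)%nat -> f k = 0) ->
  sum_f_R0 f K <= INR n * w.
Proof.
  intros Hw H1 H2. assert (forall K, sum_f_R0 f K <= INR (Nat.min (S K) n) * w).
  { induction K0.
    - simpl sum_f_R0. destruct n.
      + rewrite H2 by lia. simpl. lra.
      + replace (Nat.min 1 (S n)) with 1%nat by lia. simpl INR. rewrite Rmult_1_l. apply H1. lia.
    - simpl sum_f_R0. destruct (Nat.lt_ge_cases (S K0) n).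
      + rewrite (Nat.min_l (S (S K0)) n) by lia. rewrite (Nat.min_l (S K0) n) in IHK0 by lia.
        rewrite S_INR with (n := S K0). pose proof (H1 (S K0) H). lra.
      + rewrite H2 by lia. rewrite (Nat.min_r (S (S K0)) n) by lia.
        assert (INR (Nat.min (S K0) n) <= INR n) by (apply le_INR; lia). nra. }
  eapply Rle_trans. apply H. apply Rmult_le_compat_r; auto. apply le_INR; lia.
Qed.

Lemma null_finite (bad : list R) : null_set (fun s => In s bad).
Proof.
  intros eps Heps.
  set (n := length bad). set (w := eps / (2 * (INR n + 1))).
  assert (Hw : 0 < w) by (unfold w; apply Rdiv_lt_0_compat; [lra| pose proof (pos_INR n); lra]).
  exists (fun k => if Nat.ltb k n then nth k bad 0 - w else 0).
  exists (fun k => if Nat.ltb k n then nth k bad 0 + w else 0).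
  split; [|split].
  - intros k. destruct (Nat.ltb k n); lra.
  - intros s Hs. destruct (In_nth bad s 0 Hs) as [k [Hk Hks]]. exists k.
    fold n in Hk. replace (Nat.ltb k n) with true by (symmetry; apply Nat.ltb_lt; auto). lra.
  - intros K. eapply Rle_trans. apply (sum_f_R0_ind_le _ (2 * w) n K).
    lra. intros k Hk. replace (Nat.ltb k n) with true by (symmetry; apply Nat.ltb_lt; auto). lra.
    intros k Hk. replace (Nat.ltb k n) with false by (symmetry; apply Nat.ltb_ge; auto). lra.
    unfold w. pose proof (pos_INR n).
    replace (INR n * (2 * (eps / (2 * (INR n + 1))))) with (eps * (INR n / (INR n + 1))) by (field; lra).
    assert (INR n / (INR n + 1) <= 1). { apply Rmult_le_reg_r with (INR n + 1). lra. field_simplify; lra. }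
    nra.
Qed.

Lemma partition_le1 a l : partition_from a l -> a <= 1.
Proof.
  revert a; induction l; simpl; intros. lra. destruct H. specialize (IHl _ H0). lra.
Qed.

Lemma lip_length g K : 0 <= K -> lipz g K -> length_le g K.
Proof.
  intros HK Hg l Hl.
  assert (forall a, 0 <= a -> partition_from a l -> poly_len g a l <= K * (1 - a)).
  { clear Hl. induction l as [|s l IH]; intros a Ha Hl; simpl in *.
    - subst. lra.
    - destruct Hl as [H1 H2]. pose proof (partition_le1 _ _ H2).
      pose proof (IH s ltac:(lra) H2).
      pose proof (Hg a s ltac:(split; lra) ltac:(split; lra)). rewrite Rabs_right in H3 by lra. nra. }
  specialize (H 0 (Rle_refl 0) Hl). lra.
Qed.

Lemma nice_hcurve m g K bad : 0 <= K -> nice m g K bad -> horizontal m g /\ length_le g K.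
Proof.
  intros HK [Hz [[Kt Ht] Hr]].
  assert (HKt : 0 <= Kt \/ forall u v, 0 <= u <= 1 -> 0 <= v <= 1 -> pt3 (g v) = pt3 (g u)).
  { destruct (Rle_dec 0 Kt). auto. right. intros u v Hu Hv. destruct (Req_dec u v). subst; auto.
    pose proof (Ht u v Hu Hv). pose proof (Rabs_pos (pt3 (g v) - pt3 (g u))).
    assert (0 < Rabs (v - u)) by (apply Rabs_pos_lt; lra). nra. }
  split; [|apply lip_length; auto].
  split; [|split; [|split]].
  - apply lip_abs_cont with K; auto. intros u v Hu Hv. eapply Rle_trans. apply norm2_abs1. apply Hz; auto.
  - apply lip_abs_cont with K; auto. intros u v Hu Hv. eapply Rle_trans. apply norm2_abs2. apply Hz; auto.
  - destruct HKt as [HKt|HKt]. apply lip_abs_cont with Kt; auto.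
    apply lip_abs_cont with 0. lra. intros u v Hu Hv. rewrite (HKt u v Hu Hv). unfold Rminus; rewrite Rplus_opp_r, Rabs_R0. lra.
  - exists (fun s => In s bad). split. apply null_finite.
    intros s Hs Hn. destruct (Hr s Hs Hn) as [a [b [H1 [H2 H3]]]]. exists a, b. auto.
Qed.

Lemma deriv_local f h s l :
  (exists d, 0 < d /\ forall y, Rabs (y - s) < d -> f y = h y) ->
  derivable_pt_lim h s l -> derivable_pt_lim f s l.
Proof.
  intros [d [Hd Hfh]] Hh eps Heps. destruct (Hh eps Heps) as [d' Hd'].
  assert (Hm : 0 < Rmin d d') by (apply Rmin_pos; auto; apply (cond_pos d')).
  exists (mkposreal _ Hm). intros hh Hh0 Hhd. simpl in Hhd.
  rewrite (Hfh (s + hh)), (Hfh s).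
  apply Hd'; auto. pose proof (Rmin_r d d'). lra.
  unfold Rminus; rewrite Rplus_opp_r, Rabs_R0; auto.
  replace (s + hh - s) with hh by ring. pose proof (Rmin_l d d'). lra.
Qed.

Lemma deriv_scale f s a l : derivable_pt_lim f (a * s) l ->
  derivable_pt_lim (fun u => f (a * u)) s (l * a).
Proof.
  intros H. apply (derivable_pt_lim_comp (fun u => a * u) f s a l); auto.
  pose proof (derivable_pt_lim_scal (fun u => u) a s 1 (derivable_pt_lim_id s)).
  unfold mult_real_fct in H0. rewrite Rmult_1_r in H0. exact H0.
Qed.

Definition concat (g1 g2 : R -> pt) (s : R) : pt :=
  if Rle_dec s (1/2) then g1 (2 * s) else g2 (2 * s - 1).

Lemma concat_0 g1 g2 : concat g1 g2 0 = g1 0.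
Proof. unfold concat. destruct (Rle_dec 0 (1/2)). f_equal; ring. lra. Qed.
Lemma concat_1 g1 g2 : concat g1 g2 1 = g2 1.
Proof. unfold concat. destruct (Rle_dec 1 (1/2)). lra. f_equal; ring. Qed.

Lemma concat_lip_gen (d : pt -> pt -> R) g1 g2 K1 K2 :
  0 <= K1 -> 0 <= K2 ->
  (forall p q r, d p r <= d p q + d q r) -> (forall p q, d p q = d q p) ->
  (forall u v, 0 <= u <= 1 -> 0 <= v <= 1 -> d (g1 u) (g1 v) <= K1 * Rabs (v - u)) ->
  (forall u v, 0 <= u <= 1 -> 0 <= v <= 1 -> d (g2 u) (g2 v) <= K2 * Rabs (v - u)) ->
  g1 1 = g2 0 ->
  forall u v, 0 <= u <= 1 -> 0 <= v <= 1 ->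
    d (concat g1 g2 u) (concat g1 g2 v) <= 2 * (K1 + K2) * Rabs (v - u).
Proof.
  intros HK1 HK2 Htri Hsym H1 H2 Hj.
  assert (Hmain : forall u v, 0 <= u <= 1 -> 0 <= v <= 1 -> u <= v ->
    d (concat g1 g2 u) (concat g1 g2 v) <= 2 * (K1 + K2) * Rabs (v - u)).
  { intros u v Hu Hv Huv. rewrite (Rabs_right (v - u)) by lra. unfold concat.
    destruct (Rle_dec u (1/2)); destruct (Rle_dec v (1/2)).
    - eapply Rle_trans. apply H1; lra. replace (2 * v - 2 * u) with (2 * (v - u)) by ring.
      rewrite Rabs_right by lra. nra.
    - eapply Rle_trans. apply (Htri _ (g1 1)). rewrite Hj.
      pose proof (H1 (2*u) 1 ltac:(split; lra) ltac:(split; lra)).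
      pose proof (H2 0 (2*v-1) ltac:(split; lra) ltac:(split; lra)). rewrite Hj in H.
      rewrite Rabs_right in H by lra. rewrite Rabs_right in H0 by lra. nra.
    - lra.
    - eapply Rle_trans. apply H2; lra. replace (2 * v - 1 - (2 * u - 1)) with (2 * (v - u)) by ring.
      rewrite Rabs_right by lra. nra. }
  intros u v Hu Hv. destruct (Rle_dec u v). auto.
  rewrite Hsym, Rabs_minus_sym. apply Hmain; auto. lra.
Qed.

Definition dz (p q : pt) := norm2 (px q - px p) (py q - py p).
Definition dt (p q : pt) := Rabs (pt3 q - pt3 p).

Lemma dz_tri p q r : dz p r <= dz p q + dz q r.
Proof. unfold dz. rewrite Rplus_comm. apply norm2_tri3. Qed.
Lemma dz_sym p q : dz p q = dz q p.
Proof. unfold dz. apply norm2_sub_sym. Qed.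
Lemma dt_tri p q r : dt p r <= dt p q + dt q r.
Proof. unfold dt. replace (pt3 r - pt3 p) with ((pt3 q - pt3 p) + (pt3 r - pt3 q)) by ring. apply Rabs_triang. Qed.
Lemma dt_sym p q : dt p q = dt q p.
Proof. unfold dt. apply Rabs_minus_sym. Qed.

Lemma deriv_lin f s a b l : derivable_pt_lim f (a * s + b) l ->
  derivable_pt_lim (fun u => f (a * u + b)) s (l * a).
Proof.
  intros H. apply (derivable_pt_lim_comp (fun u => a * u + b) f s a l); auto.
  pose proof (derivable_pt_lim_plus (fun u => a * u) (fun _ => b) s a 0).
  unfold plus_fct in H0. rewrite Rplus_0_r in H0. apply H0.
  pose proof (derivable_pt_lim_scal (fun u => u) a s 1 (derivable_pt_lim_id s)).
  unfold mult_real_fct in H1. rewrite Rmult_1_r in H1. exact H1.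
  apply derivable_pt_lim_const.
Qed.

Lemma hrel_lin m g s a b : 0 < a -> hrel m g (a * s + b) -> hrel m (fun u => g (a * u + b)) s.
Proof.
  intros Ha [al [be [H1 [H2 H3]]]]. exists (al * a), (be * a).
  split; [|split].
  - apply (deriv_lin (fun u => px (g u))); auto.
  - apply (deriv_lin (fun u => py (g u))); auto.
  - pose proof (deriv_lin (fun u => pt3 (g u)) s a b _ H3). simpl in H.
    replace (w2m m (px (g (a * s + b))) (py (g (a * s + b))) * (al * a * py (g (a * s + b)) - be * a * px (g (a * s + b))))
      with (w2m m (px (g (a * s + b))) (py (g (a * s + b))) * (al * py (g (a * s + b)) - be * px (g (a * s + b))) * a) by ring.
    exact H.
Qed.

Lemma hrel_local m g h s : (exists d, 0 < d /\ forall y, Rabs (y - s) < d -> g y = h y) ->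
  hrel m h s -> hrel m g s.
Proof.
  intros [d [Hd Hgh]] [al [be [H1 [H2 H3]]]]. exists al, be.
  assert (Hs : g s = h s) by (apply Hgh; unfold Rminus; rewrite Rplus_opp_r, Rabs_R0; auto).
  split; [|split]; [apply deriv_local with (fun u => px (h u))| apply deriv_local with (fun u => py (h u))|
    apply deriv_local with (fun u => pt3 (h u))]; auto;
  try (exists d; split; auto; intros y Hy; rewrite (Hgh y Hy); auto).
  rewrite Hs. auto.
Qed.

Lemma nice_concat m g1 g2 K1 K2 b1 b2 :
  0 <= K1 -> 0 <= K2 -> nice m g1 K1 b1 -> nice m g2 K2 b2 -> g1 1 = g2 0 ->
  nice m (concat g1 g2) (2 * (K1 + K2))
    (map (fun s => s / 2) b1 ++ (1/2) :: map (fun s => (s + 1) / 2) b2).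
Proof.
  intros HK1 HK2 [Hz1 [[Kt1 Ht1] Hr1]] [Hz2 [[Kt2 Ht2] Hr2]] Hj.
  split; [|split].
  - intros u v Hu Hv. apply (concat_lip_gen dz g1 g2 K1 K2 HK1 HK2 dz_tri dz_sym); auto.
  - assert (forall (g : R -> pt) Kt, (forall u v, 0 <= u <= 1 -> 0 <= v <= 1 -> Rabs (pt3 (g v) - pt3 (g u)) <= Kt * Rabs (v - u)) ->
      forall u v, 0 <= u <= 1 -> 0 <= v <= 1 -> dt (g u) (g v) <= Rabs Kt * Rabs (v - u)).
    { intros g Kt H u v Hu Hv. unfold dt. eapply Rle_trans. apply H; auto.
      apply Rmult_le_compat_r. apply Rabs_pos. apply RRle_abs. }
    exists (2 * (Rabs Kt1 + Rabs Kt2)). intros u v Hu Hv.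
    apply (concat_lip_gen dt g1 g2 (Rabs Kt1) (Rabs Kt2) (Rabs_pos _) (Rabs_pos _) dt_tri dt_sym); auto.
  - intros s Hs Hn.
    destruct (Rlt_le_dec s (1/2)) as [Hlt|Hge].
    + apply hrel_local with (fun u => g1 (2 * u + 0)).
      * exists (1/2 - s). split. lra. intros y Hy. unfold concat.
        destruct (Rle_dec y (1/2)). f_equal; ring. apply Rabs_def2 in Hy. lra.
      * apply hrel_lin. lra. apply Hr1. lra. intro Hin. apply Hn. apply in_or_app. left.
        apply in_map_iff. exists (2 * s + 0). split; [field|auto].
    + destruct (Req_dec s (1/2)). exfalso. apply Hn. apply in_or_app. right. left. auto.
      apply hrel_local with (fun u => g2 (2 * u + - 1)).
      * exists (s - 1/2). split. lra. intros y Hy. unfold concat.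
        destruct (Rle_dec y (1/2)). apply Rabs_def2 in Hy. lra. f_equal; ring.
      * apply hrel_lin. lra. apply Hr2. lra. intro Hin. apply Hn. apply in_or_app. right. right.
        apply in_map_iff. exists (2 * s + - 1). split; [field|auto].
Qed.

Lemma D_plus f g c a b : derivable_pt_lim f c a -> derivable_pt_lim g c b ->
  derivable_pt_lim (fun s => f s + g s) c (a + b).
Proof. intros. apply (derivable_pt_lim_plus f g c a b); auto. Qed.
Lemma D_minus f g c a b : derivable_pt_lim f c a -> derivable_pt_lim g c b ->
  derivable_pt_lim (fun s => f s - g s) c (a - b).
Proof. intros. apply (derivable_pt_lim_minus f g c a b); auto. Qed.
Lemma D_mult f g c a b : derivable_pt_lim f c a -> derivable_pt_lim g c b ->
  derivable_pt_lim (fun s => f s * g s) c (a * g c + f c * b).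
Proof. intros. apply (derivable_pt_lim_mult f g c a b); auto. Qed.
Lemma D_const k c : derivable_pt_lim (fun _ => k) c 0.
Proof. apply derivable_pt_lim_const. Qed.
Lemma D_id c : derivable_pt_lim (fun s => s) c 1.
Proof. apply derivable_pt_lim_id. Qed.
Lemma D_mulc f c a k : derivable_pt_lim f c a -> derivable_pt_lim (fun s => f s * k) c (a * k).
Proof. intros. replace (a * k) with (a * k + f c * 0) by ring. apply D_mult; auto. apply D_const. Qed.
Lemma D_cmul f c a k : derivable_pt_lim f c a -> derivable_pt_lim (fun s => k * f s) c (k * a).
Proof. intros. replace (k * a) with (0 * f c + k * a) by ring. apply (D_mult (fun _ => k) f); auto. apply D_const. Qed.

Lemma D_ext f g c a b : (forall s, f s = g s) -> a = b -> derivable_pt_lim g c b -> derivable_pt_lim f c a.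
Proof.
  intros Hfg Hab H eps Heps. subst. destruct (H eps Heps) as [d Hd]. exists d. intros h Hh Hhd.
  rewrite !Hfg. apply Hd; auto.
Qed.

Lemma lip1D f f' u v K : u <= v ->
  (forall s, u <= s <= v -> derivable_pt_lim f s (f' s)) ->
  (forall s, u <= s <= v -> Rabs (f' s) <= K) ->
  Rabs (f v - f u) <= K * (v - u).
Proof.
  intros Huv Hd Hb. destruct (Req_dec u v). subst. unfold Rminus; rewrite !Rplus_opp_r, Rabs_R0. lra.
  destruct (MVT_cor2 f f' u v ltac:(lra) Hd) as [c [Hc1 Hc2]]. rewrite Hc1.
  rewrite Rabs_mult, (Rabs_right (v - u)) by lra. apply Rmult_le_compat_r. lra. apply Hb. lra.
Qed.

Lemma lip2D x y al be u v K : u <= v ->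
  (forall s, u <= s <= v -> derivable_pt_lim x s (al s)) ->
  (forall s, u <= s <= v -> derivable_pt_lim y s (be s)) ->
  (forall s, u <= s <= v -> norm2 (al s) (be s) <= K) ->
  norm2 (x v - x u) (y v - y u) <= K * (v - u).
Proof.
  intros Huv Hx Hy Hb.
  assert (HK : 0 <= K) by (eapply Rle_trans; [apply norm2_ge0| apply (Hb u); lra]).
  destruct (Req_dec u v). subst. unfold Rminus; rewrite !Rplus_opp_r, norm2_00. lra.
  set (Dx := x v - x u). set (Dy := y v - y u).
  set (h := fun s => (x s - x u) * Dx + (y s - y u) * Dy).
  assert (Hh : forall s, u <= s <= v -> derivable_pt_lim h s (al s * Dx + be s * Dy)).
  { intros s Hs. unfold h. apply D_plus; apply D_mulc.
    replace (al s) with (al s - 0) by ring. apply D_minus. auto. apply D_const.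
    replace (be s) with (be s - 0) by ring. apply D_minus. auto. apply D_const. }
  destruct (MVT_cor2 h _ u v ltac:(lra) Hh) as [c [Hc1 Hc2]].
  assert (Hhv : h v - h u = Dx * Dx + Dy * Dy) by (unfold h, Dx, Dy; ring).
  rewrite Hhv in Hc1.
  pose proof (cauchy_schwarz (al c) (be c) Dx Dy) as CS.
  pose proof (Hb c ltac:(lra)) as Hbc. pose proof (norm2_sq Dx Dy) as Hsq. pose proof (norm2_ge0 Dx Dy) as Hn0.
  pose proof (norm2_ge0 (al c) (be c)) as Hn1.
  assert (Hk : norm2 Dx Dy * norm2 Dx Dy <= K * norm2 Dx Dy * (v - u)).
  { rewrite Hsq, Hc1.
    assert ((al c * Dx + be c * Dy) <= K * norm2 Dx Dy). { eapply Rle_trans. apply CS. apply Rmult_le_compat_r; auto. }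
    nra. }
  destruct (Req_dec (norm2 Dx Dy) 0) as [Hz|Hz]. rewrite Hz. nra.
  apply Rmult_le_reg_l with (norm2 Dx Dy). lra. nra.
Qed.

Lemma nice_smooth m g al be K Kt :
  (forall s, derivable_pt_lim (fun u => px (g u)) s (al s)) ->
  (forall s, derivable_pt_lim (fun u => py (g u)) s (be s)) ->
  (forall s, derivable_pt_lim (fun u => pt3 (g u)) s
      (w2m m (px (g s)) (py (g s)) * (al s * py (g s) - be s * px (g s)))) ->
  (forall s, 0 <= s <= 1 -> norm2 (al s) (be s) <= K) ->
  (forall s, 0 <= s <= 1 -> Rabs (w2m m (px (g s)) (py (g s)) * (al s * py (g s) - be s * px (g s))) <= Kt) ->
  nice m g K nil.
Proof.
  intros Hx Hy Ht Hb Hbt. split; [|split].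
  - assert (Hm : forall u v, 0 <= u <= 1 -> 0 <= v <= 1 -> u <= v ->
      norm2 (px (g v) - px (g u)) (py (g v) - py (g u)) <= K * Rabs (v - u)).
    { intros u v Hu Hv Huv. rewrite Rabs_right by lra.
      apply (lip2D (fun s => px (g s)) (fun s => py (g s)) al be u v K); auto. intros; apply Hb; lra. }
    intros u v Hu Hv. destruct (Rle_dec u v). auto.
    rewrite norm2_sub_sym, Rabs_minus_sym. apply Hm; auto; lra.
  - exists Kt.
    assert (Hm : forall u v, 0 <= u <= 1 -> 0 <= v <= 1 -> u <= v ->
      Rabs (pt3 (g v) - pt3 (g u)) <= Kt * Rabs (v - u)).
    { intros u v Hu Hv Huv. rewrite (Rabs_right (v - u)) by lra.
      apply (lip1D (fun s => pt3 (g s)) (fun s => w2m m (px (g s)) (py (g s)) * (al s * py (g s) - be s * px (g s)))); auto.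
      intros; apply Hbt; lra. }
    intros u v Hu Hv. destruct (Rle_dec u v). auto.
    rewrite Rabs_minus_sym, (Rabs_minus_sym v). apply Hm; auto; lra.
  - intros s _ _. exists (al s), (be s). auto.
Qed.

Definition fR (m r : R) : R := rpow r (2 * m) * (r * r).

Lemma w2m_nonneg m x y : 0 <= w2m m x y.
Proof. apply rpow_ge0. Qed.

Lemma D_lin a b c : derivable_pt_lim (fun s => a * s + b) c a.
Proof.
  assert (H := D_plus (fun s => a * s) (fun _ => b) c (a*1) 0 (D_cmul _ _ _ a (D_id c)) (D_const b c)).
  rewrite Rmult_1_r, Rplus_0_r in H. exact H.
Qed.

Lemma nice_X m x y T o u v : 1 <= m ->
  (forall w, derivable_pt_lim T w (w2m m (x + w) y * y)) ->
  nice m (fun s => (x + (u + (v - u) * s), y, T (u + (v - u) * s) + o)) (Rabs (v - u)) nil.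
Proof.
  intros hm HT.
  set (B := rpow (Rabs x + (Rabs u + Rabs v) + Rabs y) (2 * m) * Rabs y * Rabs (v - u)).
  apply nice_smooth with (al := fun _ => v - u) (be := fun _ => 0) (Kt := B); simpl.
  - intros s. apply (D_ext _ (fun s => (v - u) * s + (x + u)) _ _ (v - u)). intros; unfold px; simpl; ring. reflexivity.
    apply D_lin.
  - intros s. unfold py; cbn [fst snd]. apply D_const.
  - intros s. replace (u + (v - u) * s) with ((v - u) * s + u) by ring.
    apply (D_ext _ (fun s => T ((v - u) * s + u) + o) _ _ (w2m m (x + ((v - u) * s + u)) y * y * (v - u) + 0)).
    intros; unfold pt3; simpl; f_equal; f_equal; ring. unfold px, py; simpl; ring.
    apply D_plus; [|apply D_const]. apply deriv_lin. apply HT.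
  - intros s Hs. unfold norm2. replace ((v - u) * (v - u) + 0 * 0) with (Rsqr (v - u)) by (unfold Rsqr; ring).
    rewrite sqrt_Rsqr_abs. lra.
  - intros s Hs. unfold B. unfold px, py; cbn [fst snd].
    replace ((v - u) * y - 0 * (x + (u + (v - u) * s))) with (y * (v - u)) by ring.
    rewrite !Rabs_mult. rewrite (Rabs_right (w2m _ _ _)) by (apply Rle_ge, w2m_nonneg).
    rewrite <- Rmult_assoc.
    apply Rmult_le_compat_r. apply Rabs_pos. apply Rmult_le_compat_r. apply Rabs_pos.
    unfold w2m. apply rpow_mono. pose proof (Rle_trans _ _ _ Rle_0_1 hm); lra.
    split. apply norm2_ge0. eapply Rle_trans. apply norm2_le_sum.
    assert (Rabs (u + (v - u) * s) <= Rabs u + Rabs v).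
    { destruct Hs. replace (u + (v - u) * s) with (u * (1 - s) + v * s) by ring.
      eapply Rle_trans. apply Rabs_triang. rewrite !Rabs_mult, (Rabs_right s), (Rabs_right (1 - s)) by lra.
      pose proof (Rabs_pos u). pose proof (Rabs_pos v). nra. }
    pose proof (Rabs_triang x (u + (v - u) * s)). lra.
Qed.

Definition gR (k0 k1 xb yb tb : R) (s : R) : pt := ((k0 + k1 * s) * xb, (k0 + k1 * s) * yb, tb).

Lemma nice_R m k0 k1 xb yb tb : nice m (gR k0 k1 xb yb tb) (Rabs k1 * norm2 xb yb) nil.
Proof.
  apply nice_smooth with (al := fun _ => k1 * xb) (be := fun _ => k1 * yb) (Kt := 0); unfold gR, px, py, pt3; cbn [fst snd].
  - intros s. eapply (D_ext _ (fun s => (k1 * xb) * s + k0 * xb)). intros; ring. reflexivity. apply D_lin.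
  - intros s. eapply (D_ext _ (fun s => (k1 * yb) * s + k0 * yb)). intros; ring. reflexivity. apply D_lin.
  - intros s. replace (k1 * xb * ((k0 + k1 * s) * yb) - k1 * yb * ((k0 + k1 * s) * xb)) with 0 by ring.
    rewrite Rmult_0_r. apply D_const.
  - intros s _. rewrite norm2_scale. lra.
  - intros s _. replace (k1 * xb * ((k0 + k1 * s) * yb) - k1 * yb * ((k0 + k1 * s) * xb)) with 0 by ring.
    rewrite Rmult_0_r, Rabs_R0. lra.
Qed.

Lemma rot_norm k xb yb c s : s * s + c * c = 1 ->
  norm2 (k * (xb * c - yb * s)) (k * (xb * s + yb * c)) = Rabs k * norm2 xb yb.
Proof.
  intros H. rewrite norm2_scale. f_equal. unfold norm2. f_equal.
  replace ((xb * c - yb * s) * (xb * c - yb * s) + (xb * s + yb * c) * (xb * s + yb * c))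
    with ((xb * xb + yb * yb) * (s * s + c * c)) by ring. rewrite H. ring.
Qed.

Lemma sc1 a : sin a * sin a + cos a * cos a = 1.
Proof. pose proof (sin2_cos2 a). unfold Rsqr in H. lra. Qed.

Definition gA (k th xb yb tb F : R) (s : R) : pt :=
  (k * (xb * cos (th * s) - yb * sin (th * s)), k * (xb * sin (th * s) + yb * cos (th * s)), tb - F * th * s).

Lemma D_cos_lin th c : derivable_pt_lim (fun s => cos (th * s)) c (- sin (th * c) * th).
Proof.
  apply (D_ext _ (fun s => cos (th * s + 0)) c _ (- sin (th * c + 0) * th)).
  intros; rewrite Rplus_0_r; reflexivity. rewrite Rplus_0_r; reflexivity.
  apply deriv_lin. apply derivable_pt_lim_cos.
Qed.
Lemma D_sin_lin th c : derivable_pt_lim (fun s => sin (th * s)) c (cos (th * c) * th).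
Proof.
  apply (D_ext _ (fun s => sin (th * s + 0)) c _ (cos (th * c + 0) * th)).
  intros; rewrite Rplus_0_r; reflexivity. rewrite Rplus_0_r; reflexivity.
  apply deriv_lin. apply derivable_pt_lim_sin.
Qed.

Lemma rot_norm2 xb yb c s : s * s + c * c = 1 ->
  norm2 (- (xb * s + yb * c)) (xb * c - yb * s) = norm2 xb yb.
Proof.
  intros H. unfold norm2. f_equal.
  replace (- (xb * s + yb * c) * - (xb * s + yb * c) + (xb * c - yb * s) * (xb * c - yb * s))
    with ((xb * xb + yb * yb) * (s * s + c * c)) by ring. rewrite H. ring.
Qed.

Lemma nice_A m k th xb yb tb : 0 <= k ->
  nice m (gA k th xb yb tb (fR m (k * norm2 xb yb))) (Rabs th * k * norm2 xb yb) nil.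
Proof.
  intros Hk. set (F := fR m (k * norm2 xb yb)).
  assert (HE : forall s, w2m m (k * (xb * cos (th * s) - yb * sin (th * s))) (k * (xb * sin (th * s) + yb * cos (th * s))) *
     (- th * k * (xb * sin (th * s) + yb * cos (th * s)) * (k * (xb * sin (th * s) + yb * cos (th * s))) -
      th * k * (xb * cos (th * s) - yb * sin (th * s)) * (k * (xb * cos (th * s) - yb * sin (th * s)))) = - (F * th)).
  { intros s. unfold w2m. rewrite rot_norm by apply sc1. rewrite Rabs_right by lra.
    unfold F, fR. pose proof (norm2_sq xb yb). pose proof (sc1 (th * s)).
    transitivity (- (rpow (k * norm2 xb yb) (2 * m) * th * k * k * ((xb * xb + yb * yb) * (sin (th*s) * sin (th*s) + cos (th*s) * cos (th*s))))).
    ring. rewrite H0, <- H. ring. }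
  apply nice_smooth with (al := fun s => - th * k * (xb * sin (th * s) + yb * cos (th * s)))
    (be := fun s => th * k * (xb * cos (th * s) - yb * sin (th * s))) (Kt := Rabs (F * th));
    unfold gA, px, py, pt3; cbn [fst snd].
  - intros s. eapply (D_ext _ (fun s => k * (xb * cos (th * s) - yb * sin (th * s)))). intros; ring.
    2: { apply D_cmul. apply D_minus; apply D_cmul. apply D_cos_lin. apply D_sin_lin. }
    ring.
  - intros s. eapply (D_ext _ (fun s => k * (xb * sin (th * s) + yb * cos (th * s)))). intros; ring.
    2: { apply D_cmul. apply D_plus; apply D_cmul. apply D_sin_lin. apply D_cos_lin. }
    ring.
  - intros s. eapply (D_ext _ (fun s => (- (F * th)) * s + tb)). intros; ring.
    2: apply D_lin.
    rewrite HE. reflexivity.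
  - intros s _.
    replace (- th * k * (xb * sin (th * s) + yb * cos (th * s))) with ((th * k) * (- (xb * sin (th * s) + yb * cos (th * s)))) by ring.
    replace (th * k * (xb * cos (th * s) - yb * sin (th * s))) with ((th * k) * (xb * cos (th * s) - yb * sin (th * s))) by ring.
    rewrite norm2_scale, rot_norm2 by apply sc1. rewrite Rabs_mult, (Rabs_right k) by lra. lra.
  - intros s _. rewrite HE, Rabs_Ropp. lra.
Qed.

Lemma Rdiv_le_0_compat a b : 0 <= a -> 0 < b -> 0 <= a / b.
Proof. intros. unfold Rdiv. apply Rmult_le_pos; auto. left; apply Rinv_0_lt_compat; auto. Qed.

Lemma pt_eq (a b c a' b' c' : R) : a = a' -> b = b' -> c = c' -> ((a, b, c) : pt) = (a', b', c').
Proof. intros; subst; auto. Qed.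

Lemma fR_lt m r d : 1 <= m -> 0 < r -> 0 < d -> fR m r < fR m (r + d).
Proof.
  intros hm Hr Hd. unfold fR. pose proof (rpow_pos r (2*m) Hr).
  assert (0 <= 2 * m) by lra. assert (0 <= r <= r + d) by lra. pose proof (rpow_mono r (r + d) (2 * m) H0 H1).
  assert (r * r < (r + d) * (r + d)) by nra. apply Rlt_le_trans with (rpow r (2 * m) * ((r + d) * (r + d))).
  apply Rmult_lt_compat_l; auto. apply Rmult_le_compat_r; nra.
Qed.

Lemma length_le_mono g L L' : length_le g L -> L <= L' -> length_le g L'.
Proof. intros H HL l Hl. specialize (H l Hl). lra. Qed.

Lemma nice_concat' m g1 g2 K1 K2 b1 b2 : nice m g1 K1 b1 -> nice m g2 K2 b2 ->
  0 <= K1 -> 0 <= K2 -> g1 1 = g2 0 ->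
  nice m (concat g1 g2) (2 * (K1 + K2))
    (map (fun s => s / 2) b1 ++ (1/2) :: map (fun s => (s + 1) / 2) b2).
Proof. intros; apply nice_concat; auto. Qed.

Lemma connect m x y T u v o1 o2 d : 1 <= m ->
  (forall w, derivable_pt_lim T w (w2m m (x + w) y * y)) ->
  0 < norm2 (x + v) y -> 0 <= d -> (0 < d \/ o1 = o2) ->
  exists G, hcurve m (x + u, y, T u + o1) (x + v, y, T v + o2) G /\
    length_le G (16 * (Rabs (v - u) + 2 * d +
      Rabs ((o2 - o1) / (fR m (norm2 (x + v) y) - fR m ((1 + d / norm2 (x + v) y) * norm2 (x + v) y)))
        * (2 * norm2 (x + v) y + d))).
Proof.
  intros hm HT Hr Hd Hdo.
  set (rho := norm2 (x + v) y) in *.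
  set (th := (o2 - o1) / (fR m rho - fR m ((1 + d / rho) * rho))).
  set (k2 := 1 + d / rho).
  set (xb := x + v). set (yb := y). set (tb := T v + o1).
  set (xb' := xb * cos th - yb * sin th). set (yb' := xb * sin th + yb * cos th).
  assert (Hr' : norm2 xb' yb' = rho).
  { unfold xb', yb'. rewrite <- (Rmult_1_l (xb * cos th - yb * sin th)), <- (Rmult_1_l (xb * sin th + yb * cos th)).
    rewrite rot_norm by apply sc1. rewrite Rabs_R1. unfold rho, xb, yb. ring. }
  assert (Hk2 : k2 * rho = rho + d) by (unfold k2; field; apply Rgt_not_eq; exact Hr).
  assert (Hk2p : 1 <= k2) by (unfold k2; assert (0 <= d / rho) by (apply Rdiv_le_0_compat; lra); lra).
  set (gX := fun s => (x + (u + (v - u) * s), y, T (u + (v - u) * s) + o1)).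
  set (gR1 := gR 1 (d / rho) xb yb tb).
  set (gA1 := gA k2 th xb yb tb (fR m (k2 * norm2 xb yb))).
  set (gR2 := gR k2 (- (d / rho)) xb' yb' (tb - fR m (k2 * norm2 xb yb) * th)).
  set (gA2 := gA 1 (- th) xb' yb' (tb - fR m (k2 * norm2 xb yb) * th) (fR m (1 * norm2 xb' yb'))).
  assert (NX := nice_X m x y T o1 u v hm HT). fold gX in NX.
  assert (NR1 := nice_R m 1 (d / rho) xb yb tb). fold gR1 in NR1.
  assert (NA1 := nice_A m k2 th xb yb tb ltac:(lra)). fold gA1 in NA1.
  assert (NR2 := nice_R m k2 (- (d / rho)) xb' yb' (tb - fR m (k2 * norm2 xb yb) * th)). fold gR2 in NR2.
  assert (NA2 := nice_A m 1 (- th) xb' yb' (tb - fR m (k2 * norm2 xb yb) * th) ltac:(lra)). fold gA2 in NA2.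
  assert (J1 : gX 1 = gR1 0).
  { unfold gX, gR1, gR, xb, yb, tb. apply pt_eq; try ring. repeat f_equal; ring. }
  assert (J2 : gR1 1 = gA1 0).
  { unfold gR1, gA1, gR, gA, k2. rewrite !Rmult_0_r, cos_0, sin_0. apply pt_eq; ring. }
  assert (J3 : gA1 1 = gR2 0).
  { unfold gA1, gR2, gR, gA, xb', yb'. rewrite !Rmult_1_r. apply pt_eq; ring. }
  assert (J4 : gR2 1 = gA2 0).
  { unfold gA2, gR2, gR, gA, k2. rewrite !Rmult_0_r, cos_0, sin_0. apply pt_eq; ring. }
  assert (HKa : 0 <= Rabs (v - u)) by apply Rabs_pos.
  assert (HKb : 0 <= Rabs (d / rho) * norm2 xb yb) by (apply Rmult_le_pos; [apply Rabs_pos|apply norm2_ge0]).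
  assert (HKc : 0 <= Rabs th * k2 * norm2 xb yb) by (apply Rmult_le_pos; [apply Rmult_le_pos; [apply Rabs_pos|lra]|apply norm2_ge0]).
  assert (HKd : 0 <= Rabs (- (d / rho)) * norm2 xb' yb') by (apply Rmult_le_pos; [apply Rabs_pos|apply norm2_ge0]).
  assert (HKe : 0 <= Rabs (- th) * 1 * norm2 xb' yb') by (apply Rmult_le_pos; [apply Rmult_le_pos; [apply Rabs_pos|lra]|apply norm2_ge0]).
  assert (N4 := nice_concat _ _ _ _ _ _ _ HKd HKe NR2 NA2 J4).
  pose proof (nice_concat' _ _ _ _ _ _ _ NA1 N4) as N3. specialize (N3 HKc ltac:(apply Rmult_le_pos; [lra| apply Rplus_le_le_0_compat; auto]) ltac:(rewrite concat_0; exact J3)).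
  pose proof (nice_concat' _ _ _ _ _ _ _ NR1 N3) as N2. specialize (N2 HKb ltac:(apply Rmult_le_pos; [lra| apply Rplus_le_le_0_compat; auto; apply Rmult_le_pos; [lra| apply Rplus_le_le_0_compat; auto]]) ltac:(rewrite concat_0; exact J2)).
  pose proof (nice_concat' _ _ _ _ _ _ _ NX N2) as N1. specialize (N1 HKa ltac:(apply Rmult_le_pos; [lra| apply Rplus_le_le_0_compat; auto; apply Rmult_le_pos; [lra| apply Rplus_le_le_0_compat; auto; apply Rmult_le_pos; [lra| apply Rplus_le_le_0_compat; auto]]]) ltac:(rewrite concat_0; exact J1)).
  eexists. pose proof (fun H => nice_hcurve _ _ _ _ H N1) as HH. destruct (HH ltac:(apply Rmult_le_pos; [lra| apply Rplus_le_le_0_compat; auto; apply Rmult_le_pos; [lra| apply Rplus_le_le_0_compat; auto; apply Rmult_le_pos; [lra| apply Rplus_le_le_0_compat; auto; apply Rmult_le_pos; [lra| apply Rplus_le_le_0_compat; auto]]]])) as [Hh Hl]. split.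
  - split; [exact Hh|split].
    + rewrite concat_0. unfold gX. apply pt_eq; [ring| unfold yb; ring| repeat f_equal; ring].
    + rewrite !concat_1. unfold gA2, gA. rewrite Rmult_1_r, cos_neg, sin_neg.
      unfold xb', yb'. pose proof (sc1 th).
      assert (Hth : th * (fR m rho - fR m (k2 * rho)) = o2 - o1).
      { destruct Hdo as [Hdp|Heq].
        - unfold th. fold k2. field. rewrite Hk2. pose proof (fR_lt m rho d hm Hr Hdp). apply Rlt_not_eq. lra.
        - subst. unfold th. unfold Rdiv. ring. }
      apply pt_eq.
      * transitivity (xb * (sin th * sin th + cos th * cos th)). ring. rewrite H. unfold xb; ring.
      * transitivity (yb * (sin th * sin th + cos th * cos th)). ring. rewrite H. unfold yb; ring.
      * fold xb'. fold yb'. rewrite Hr'. unfold xb, yb. fold rho.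
        replace (1 * rho) with rho by ring. unfold tb. lra.
  - eapply length_le_mono. exact Hl.
    fold th. fold k2. replace (norm2 xb yb) with rho by reflexivity. rewrite Hr'.
    rewrite Rabs_Ropp, Rabs_Ropp. rewrite (Rabs_right (d / rho)) by (apply Rle_ge, Rdiv_le_0_compat; lra).
    replace (d / rho * rho) with d by (field; apply Rgt_not_eq; exact Hr).
    replace (Rabs th * k2 * rho) with (Rabs th * (rho + d)) by (rewrite <- Hk2; ring).
    pose proof (Rabs_pos th). assert (0 <= Rabs th * rho) by (apply Rmult_le_pos; lra).
    assert (0 <= Rabs th * d) by (apply Rmult_le_pos; lra). pose proof (Rabs_pos (v - u)).
    clear -H H0 H1 H2 Hd. lra.
Qed.

Lemma MVT_any f f' u v : (forall s, derivable_pt_lim f s (f' s)) ->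
  exists xi, Rmin u v <= xi <= Rmax u v /\ f v - f u = f' xi * (v - u).
Proof.
  intros Hd. destruct (Rtotal_order u v) as [H|[H|H]].
  - destruct (MVT_cor2 f f' u v H (fun c _ => Hd c)) as [c [Hc1 Hc2]]. exists c.
    rewrite Rmin_left, Rmax_right by lra. split; auto. lra.
  - subst. exists v. rewrite Rmin_left, Rmax_left by lra. split. lra. ring.
  - destruct (MVT_cor2 f f' v u H (fun c _ => Hd c)) as [c [Hc1 Hc2]]. exists c.
    rewrite Rmin_right, Rmax_left by lra. split. lra. lra.
Qed.

Lemma lip_any f f' u v K : (forall s, derivable_pt_lim f s (f' s)) ->
  (forall s, Rmin u v <= s <= Rmax u v -> Rabs (f' s) <= K) -> Rabs (f v - f u) <= K * Rabs (v - u).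
Proof.
  intros Hd Hb. destruct (MVT_any f f' u v Hd) as [xi [Hxi Heq]]. rewrite Heq, Rabs_mult.
  apply Rmult_le_compat_r. apply Rabs_pos. auto.
Qed.

Lemma between_abs u v s : Rmin u v <= s <= Rmax u v -> Rabs s <= Rmax (Rabs u) (Rabs v).
Proof.
  intros [H1 H2].
  pose proof (Rle_abs u) as A1; pose proof (Rle_abs (-u)) as A2; pose proof (Rle_abs v) as A3; pose proof (Rle_abs (-v)) as A4.
  rewrite Rabs_Ropp in A2, A4.
  pose proof (Rmax_l (Rabs u) (Rabs v)). pose proof (Rmax_r (Rabs u) (Rabs v)).
  apply Rabs_le. unfold Rmin, Rmax in H1, H2. destruct (Rle_dec u v); split; lra.
Qed.

Lemma corner_lip (f fx fy : R -> R -> R) K x y x' y' :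
  (forall u v, derivable_pt_lim (fun u => f u v) u (fx u v)) ->
  (forall u v, derivable_pt_lim (fun v => f u v) v (fy u v)) ->
  (forall xi, Rmin x x' <= xi <= Rmax x x' -> Rabs (fx xi y') <= K) ->
  (forall eta, Rmin y y' <= eta <= Rmax y y' -> Rabs (fy x eta) <= K) ->
  Rabs (f x' y' - f x y) <= K * (Rabs (x' - x) + Rabs (y' - y)).
Proof.
  intros Hx Hy B1 B2.
  pose proof (lip_any (fun u => f u y') (fun u => fx u y') x x' K (fun s => Hx s y') B1).
  pose proof (lip_any (fun v => f x v) (fun v => fy x v) y y' K (fun s => Hy x s) B2).
  replace (f x' y' - f x y) with ((f x' y' - f x y') + (f x y' - f x y)) by ring.
  eapply Rle_trans. apply Rabs_triang. lra.
Qed.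

Definition PP (m r : R) := rpow r (2 * m).

Lemma PP_mono m a b : 1 <= m -> 0 <= a <= b -> PP m a <= PP m b.
Proof. intros. apply rpow_mono; lra. Qed.

Lemma PPr_mono m a b : 1 <= m -> 0 <= a <= b -> PP m a * a <= PP m b * b.
Proof. intros. pose proof (PP_mono m a b H H0). apply Rmult_le_compat; try lra. apply rpow_ge0. Qed.

Lemma D1_bound m (D : list bool -> R -> R -> R) C b x y : 1 <= m ->
  (forall w x y, length w = 1%nat -> Rabs (D w x y) <= C * rpow (norm2 x y) (2 * m + 1)) ->
  Rabs (D (b :: nil) x y) <= C * (PP m (norm2 x y) * norm2 x y).
Proof.
  intros hm H. unfold PP. rewrite <- rpow_plus1 by apply norm2_ge0. apply H. reflexivity.
Qed.

Lemma D2_bound m (D : list bool -> R -> R -> R) C b1 b2 x y :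
  (forall w x y, length w = 2%nat -> Rabs (D w x y) <= C * rpow (norm2 x y) (2 * m)) ->
  Rabs (D (b1 :: b2 :: nil) x y) <= C * PP m (norm2 x y).
Proof. intros H. apply H. reflexivity. Qed.

Lemma box_norm x y R0 : Rabs x <= R0 -> Rabs y <= R0 -> norm2 x y <= 2 * R0.
Proof. intros. pose proof (norm2_le_sum x y). lra. Qed.

Lemma Rmax_le a b c : a <= c -> b <= c -> Rmax a b <= c.
Proof. intros. unfold Rmax. destruct (Rle_dec a b); lra. Qed.

Lemma Dw_lip (D : list bool -> R -> R -> R) w K R0 x y x' y' :
  (forall w x y, derivable_pt_lim (fun u => D w u y) x (D (false :: w) x y)) ->
  (forall w x y, derivable_pt_lim (fun v => D w x v) y (D (true :: w) x y)) ->
  Rabs x <= R0 -> Rabs y <= R0 -> Rabs x' <= R0 -> Rabs y' <= R0 ->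
  (forall b u v, Rabs u <= R0 -> Rabs v <= R0 -> Rabs (D (b :: w) u v) <= K) ->
  Rabs (D w x' y' - D w x y) <= K * (Rabs (x' - x) + Rabs (y' - y)).
Proof.
  intros Hx Hy H1 H2 H3 H4 HB.
  apply (corner_lip (D w) (D (false :: w)) (D (true :: w))); auto.
  - intros xi Hxi. apply HB; auto. eapply Rle_trans. apply (between_abs x x'); auto. apply Rmax_le; auto.
  - intros eta Heta. apply HB; auto. eapply Rle_trans. apply (between_abs y y'); auto. apply Rmax_le; auto.
Qed.

Lemma phi_lip m phi D C R0 x y x' y' : 1 <= m -> 0 <= C ->
  smooth_family phi D ->
  (forall w x y, length w = 1%nat -> Rabs (D w x y) <= C * rpow (norm2 x y) (2 * m + 1)) ->
  Rabs x <= R0 -> Rabs y <= R0 -> Rabs x' <= R0 -> Rabs y' <= R0 ->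
  Rabs (phi x' y' - phi x y) <= C * (PP m (2 * R0) * (2 * R0)) * (Rabs (x' - x) + Rabs (y' - y)).
Proof.
  intros hm HC [H0 [Hx [Hy Hc]]] hD1 B1 B2 B3 B4. rewrite <- H0.
  apply (Dw_lip D nil _ R0); auto. intros b u v Hu Hv.
  eapply Rle_trans. apply (D1_bound m D C b u v hm hD1).
  apply Rmult_le_compat_l; auto. apply PPr_mono; auto. split. apply norm2_ge0. apply box_norm; auto.
Qed.

Lemma PP_lip m r0 R a b : 1 <= m -> 0 < r0 -> r0 <= a <= R -> r0 <= b <= R ->
  Rabs (PP m b - PP m a) <= (2 * m * PP m R / r0) * Rabs (b - a).
Proof.
  intros hm Hr0 Ha Hb.
  assert (Hgen : forall a b, r0 <= a <= R -> r0 <= b <= R -> a <= b -> Rabs (PP m b - PP m a) <= (2 * m * PP m R / r0) * Rabs (b - a)).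
  { clear a b Ha Hb. intros a b Ha Hb Hab. rewrite (Rabs_right (b - a)) by lra.
    apply (lip1D (PP m) (fun s => 2 * m * Rpower s (2 * m - 1))); auto.
    - intros s Hs. apply deriv_local with (fun s => Rpower s (2 * m)).
      + exists (s / 2). split. lra. intros y0 Hy0. unfold PP. apply rpow_eq. apply Rabs_def2 in Hy0. lra.
      + apply derivable_pt_lim_power. lra.
    - intros s Hs. assert (Hs0 : 0 < s) by lra.
      assert (E : Rpower s (2 * m - 1) = PP m s / s).
      { unfold PP. rewrite rpow_eq by lra. replace (2 * m) with ((2 * m - 1) + 1) at 2 by ring.
        rewrite Rpower_plus, Rpower_1 by lra. field. lra. }
      rewrite E. pose proof (PP_mono m s R hm ltac:(lra)).
      assert (0 <= PP m s) by apply rpow_ge0.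
      assert (PP m s / s <= PP m R / r0).
      { unfold Rdiv. apply Rmult_le_compat; try lra. left; apply Rinv_0_lt_compat; lra. apply Rinv_le_contravar; lra. }
      assert (0 <= PP m s / s) by (apply Rdiv_le_0_compat; lra).
      rewrite Rabs_right by (apply Rle_ge; apply Rmult_le_pos; lra).
      replace (2 * m * PP m R / r0) with (2 * m * (PP m R / r0)) by (unfold Rdiv; ring).
      apply Rmult_le_compat_l; lra. }
  destruct (Rle_dec a b). auto. rewrite Rabs_minus_sym, (Rabs_minus_sym b). apply Hgen; auto. lra.
Qed.

Lemma ZF_bound m (D : list bool -> R -> R -> R) C x y : 1 <= m -> 0 <= C ->
  (forall w x y, length w = 1%nat -> Rabs (D w x y) <= C * rpow (norm2 x y) (2 * m + 1)) ->
  normZF m D x y <= (2 * C + 2) * (PP m (norm2 x y) * norm2 x y).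
Proof.
  intros hm HC hD1. unfold normZF, XF, YF. eapply Rle_trans. apply norm2_le_sum.
  pose proof (D1_bound m D C false x y hm hD1). pose proof (D1_bound m D C true x y hm hD1).
  assert (Hw : 0 <= w2m m x y) by apply rpow_ge0.
  assert (Hy : Rabs (w2m m x y * y) <= PP m (norm2 x y) * norm2 x y).
  { rewrite Rabs_mult, Rabs_right by lra. apply Rmult_le_compat_l; auto. apply norm2_abs2. }
  assert (Hx : Rabs (w2m m x y * x) <= PP m (norm2 x y) * norm2 x y).
  { rewrite Rabs_mult, Rabs_right by lra. apply Rmult_le_compat_l; auto. apply norm2_abs1. }
  pose proof (Rabs_triang (D (false :: nil) x y) (- (w2m m x y * y))). rewrite Rabs_Ropp in H1.
  pose proof (Rabs_triang (D (true :: nil) x y) (w2m m x y * x)).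
  unfold Rminus. lra.
Qed.

Lemma w2m_part m R0 r0 x y x' y' q q' : 1 <= m -> 0 < r0 ->
  Rabs x <= R0 -> Rabs y <= R0 -> Rabs x' <= R0 -> Rabs y' <= R0 ->
  r0 <= norm2 x y -> r0 <= norm2 x' y' -> Rabs q' <= R0 ->
  Rabs (w2m m x' y' * q' - w2m m x y * q) <=
    (2 * m * PP m (2 * R0) / r0) * (Rabs (x' - x) + Rabs (y' - y)) * R0 + PP m (2 * R0) * Rabs (q' - q).
Proof.
  intros hm Hr0 B1 B2 B3 B4 N1 N2 Bq.
  pose proof (box_norm x y R0 B1 B2). pose proof (box_norm x' y' R0 B3 B4).
  pose proof (PP_lip m r0 (2 * R0) (norm2 x y) (norm2 x' y') hm Hr0 ltac:(lra) ltac:(lra)) as HL.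
  fold (PP m (norm2 x y)) (PP m (norm2 x' y')) in *. unfold w2m. fold (PP m (norm2 x y)) (PP m (norm2 x' y')).
  replace (PP m (norm2 x' y') * q' - PP m (norm2 x y) * q) with
    ((PP m (norm2 x' y') - PP m (norm2 x y)) * q' + PP m (norm2 x y) * (q' - q)) by ring.
  eapply Rle_trans. apply Rabs_triang. rewrite !Rabs_mult.
  assert (Hn : Rabs (norm2 x' y' - norm2 x y) <= Rabs (x' - x) + Rabs (y' - y)).
  { eapply Rle_trans. apply norm2_rev_tri. apply norm2_le_sum. }
  assert (Hc : 0 <= 2 * m * PP m (2 * R0) / r0).
  { apply Rdiv_le_0_compat; [|lra]. apply Rmult_le_pos. lra. apply rpow_ge0. }
  apply Rplus_le_compat.
  - apply Rmult_le_compat; try apply Rabs_pos; auto.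
    eapply Rle_trans. apply HL. apply Rmult_le_compat_l; auto.
  - rewrite Rabs_right by (apply Rle_ge, rpow_ge0). apply Rmult_le_compat_r. apply Rabs_pos.
    apply PP_mono; auto. split. apply norm2_ge0. lra.
Qed.

Definition KXc (m C R0 r0 : R) := C * PP m (2 * R0) + (2 * m * PP m (2 * R0) / r0) * R0 + PP m (2 * R0).

Lemma XF_lip m phi D C R0 r0 x y x' y' : 1 <= m -> 0 <= C -> 0 < r0 ->
  smooth_family phi D ->
  (forall w x y, length w = 2%nat -> Rabs (D w x y) <= C * rpow (norm2 x y) (2 * m)) ->
  Rabs x <= R0 -> Rabs y <= R0 -> Rabs x' <= R0 -> Rabs y' <= R0 ->
  r0 <= norm2 x y -> r0 <= norm2 x' y' ->
  Rabs (XF m D x' y' - XF m D x y) <= KXc m C R0 r0 * (Rabs (x' - x) + Rabs (y' - y)) /\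
  Rabs (YF m D x' y' - YF m D x y) <= KXc m C R0 r0 * (Rabs (x' - x) + Rabs (y' - y)).
Proof.
  intros hm HC Hr0 [H0 [Hx [Hy Hc]]] hD2 B1 B2 B3 B4 N1 N2.
  assert (HD : forall b, Rabs (D (b :: nil) x' y' - D (b :: nil) x y) <= C * PP m (2 * R0) * (Rabs (x' - x) + Rabs (y' - y))).
  { intros b. apply (Dw_lip D (b :: nil) _ R0); auto. intros b' u v Hu Hv.
    eapply Rle_trans. apply (D2_bound m D C b' b u v hD2). apply Rmult_le_compat_l; auto.
    apply PP_mono; auto. split. apply norm2_ge0. apply box_norm; auto. }
  assert (Hs : 0 <= Rabs (x' - x) + Rabs (y' - y)) by (pose proof (Rabs_pos (x'-x)); pose proof (Rabs_pos (y'-y)); lra).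
  assert (HP : 0 <= PP m (2 * R0)) by apply rpow_ge0.
  assert (HR0 : 0 <= R0) by (pose proof (Rabs_pos x); lra).
  pose proof (Rabs_pos (x' - x)). pose proof (Rabs_pos (y' - y)).
  split.
  - unfold XF. pose proof (w2m_part m R0 r0 x y x' y' y y' hm Hr0 B1 B2 B3 B4 N1 N2 B4).
    pose proof (HD false).
    replace (D (false :: nil) x' y' - w2m m x' y' * y' - (D (false :: nil) x y - w2m m x y * y)) with
      ((D (false :: nil) x' y' - D (false :: nil) x y) - (w2m m x' y' * y' - w2m m x y * y)) by ring.
    unfold Rminus at 1. eapply Rle_trans. apply Rabs_triang. rewrite Rabs_Ropp.
    assert (PP m (2 * R0) * Rabs (y' - y) <= PP m (2 * R0) * (Rabs (x' - x) + Rabs (y' - y))) by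
      (apply Rmult_le_compat_l; lra).
    assert (E : KXc m C R0 r0 * (Rabs (x' - x) + Rabs (y' - y)) = C * PP m (2 * R0) * (Rabs (x' - x) + Rabs (y' - y))
      + 2 * m * PP m (2 * R0) / r0 * (Rabs (x' - x) + Rabs (y' - y)) * R0 + PP m (2 * R0) * (Rabs (x' - x) + Rabs (y' - y)))
      by (unfold KXc; ring).
    rewrite E. lra.
  - unfold YF. pose proof (w2m_part m R0 r0 x y x' y' x x' hm Hr0 B1 B2 B3 B4 N1 N2 B3).
    pose proof (HD true).
    replace (D (true :: nil) x' y' + w2m m x' y' * x' - (D (true :: nil) x y + w2m m x y * x)) with
      ((D (true :: nil) x' y' - D (true :: nil) x y) + (w2m m x' y' * x' - w2m m x y * x)) by ring.
    eapply Rle_trans. apply Rabs_triang.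
    assert (PP m (2 * R0) * Rabs (x' - x) <= PP m (2 * R0) * (Rabs (x' - x) + Rabs (y' - y))) by
      (apply Rmult_le_compat_l; lra).
    assert (E : KXc m C R0 r0 * (Rabs (x' - x) + Rabs (y' - y)) = C * PP m (2 * R0) * (Rabs (x' - x) + Rabs (y' - y))
      + 2 * m * PP m (2 * R0) / r0 * (Rabs (x' - x) + Rabs (y' - y)) * R0 + PP m (2 * R0) * (Rabs (x' - x) + Rabs (y' - y)))
      by (unfold KXc; ring).
    rewrite E. lra.
Qed.

Lemma ZF_lip m phi D C R0 r0 x y x' y' : 1 <= m -> 0 <= C -> 0 < r0 ->
  smooth_family phi D ->
  (forall w x y, length w = 2%nat -> Rabs (D w x y) <= C * rpow (norm2 x y) (2 * m)) ->
  Rabs x <= R0 -> Rabs y <= R0 -> Rabs x' <= R0 -> Rabs y' <= R0 ->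
  r0 <= norm2 x y -> r0 <= norm2 x' y' ->
  Rabs (normZF m D x' y' - normZF m D x y) <= 2 * KXc m C R0 r0 * (Rabs (x' - x) + Rabs (y' - y)).
Proof.
  intros. destruct (XF_lip m phi D C R0 r0 x y x' y') as [A B]; auto.
  unfold normZF. eapply Rle_trans. apply norm2_rev_tri. eapply Rle_trans. apply norm2_le_sum. lra.
Qed.

Lemma norm2_mono a b a' b' : Rabs a <= Rabs a' -> Rabs b <= Rabs b' -> norm2 a b <= norm2 a' b'.
Proof.
  intros H1 H2. unfold norm2. apply sqrt_le_1_alt.
  rewrite <- (abs_sq a), <- (abs_sq b), <- (abs_sq a'), <- (abs_sq b').
  pose proof (Rabs_pos a). pose proof (Rabs_pos b). nra.
Qed.

Lemma between_dist u v s : Rmin u v <= s <= Rmax u v -> Rabs (s - u) <= Rabs (v - u).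
Proof.
  intros [H1 H2]. unfold Rmin, Rmax in *. destruct (Rle_dec u v).
  - rewrite !Rabs_right by lra. lra.
  - rewrite !Rabs_left1 by lra. lra.
Qed.

Lemma phi_frechet phi D x0 y0 : smooth_family phi D -> forall eps, 0 < eps ->
  exists d, 0 < d /\ forall x y, norm2 (x - x0) (y - y0) < d ->
    Rabs (phi x y - phi x0 y0 - D (false :: nil) x0 y0 * (x - x0) - D (true :: nil) x0 y0 * (y - y0))
      <= eps * (Rabs (x - x0) + Rabs (y - y0)).
Proof.
  intros [H0 [Hx [Hy Hc]]] eps Heps.
  destruct (Hc (false :: nil) x0 y0 eps Heps) as [d1 [Hd1 H1]].
  destruct (Hc (true :: nil) x0 y0 eps Heps) as [d2 [Hd2 H2]].
  exists (Rmin d1 d2). split. apply Rmin_pos; auto.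
  intros x y Hxy. rewrite <- H0.
  destruct (MVT_any (fun u => D nil u y) (fun u => D (false :: nil) u y) x0 x (fun s => Hx nil s y)) as [xi [Hxi E1]].
  destruct (MVT_any (fun v => D nil x0 v) (fun v => D (true :: nil) x0 v) y0 y (fun s => Hy nil x0 s)) as [eta [Heta E2]].
  simpl in E1, E2.
  replace (D nil x y - D nil x0 y0 - D (false :: nil) x0 y0 * (x - x0) - D (true :: nil) x0 y0 * (y - y0)) with
    ((D nil x y - D nil x0 y) + (D nil x0 y - D nil x0 y0) - D (false :: nil) x0 y0 * (x - x0) - D (true :: nil) x0 y0 * (y - y0))
    by ring.
  rewrite E1, E2.
  replace (D (false :: nil) xi y * (x - x0) + D (true :: nil) x0 eta * (y - y0) - D (false :: nil) x0 y0 * (x - x0) -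
    D (true :: nil) x0 y0 * (y - y0)) with
    ((D (false :: nil) xi y - D (false :: nil) x0 y0) * (x - x0) + (D (true :: nil) x0 eta - D (true :: nil) x0 y0) * (y - y0))
    by ring.
  pose proof (Rmin_l d1 d2). pose proof (Rmin_r d1 d2).
  assert (A1 : Rabs (D (false :: nil) xi y - D (false :: nil) x0 y0) < eps).
  { apply H1. eapply Rle_lt_trans. apply (norm2_mono _ _ (x - x0) (y - y0)). apply (between_dist x0 x xi Hxi). apply Rle_refl. lra. }
  assert (A2 : Rabs (D (true :: nil) x0 eta - D (true :: nil) x0 y0) < eps).
  { apply H2. eapply Rle_lt_trans. apply (norm2_mono _ _ (x - x0) (y - y0)). unfold Rminus; rewrite Rplus_opp_r, Rabs_R0; apply Rabs_pos.
    apply (between_dist y0 y eta Heta). lra. }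
  eapply Rle_trans. apply Rabs_triang. rewrite !Rabs_mult.
  pose proof (Rabs_pos (x - x0)). pose proof (Rabs_pos (y - y0)). nra.
Qed.

Lemma deriv_approx f s l : derivable_pt_lim f s l -> forall eps, 0 < eps ->
  exists d, 0 < d /\ forall s', Rabs (s' - s) < d -> Rabs (f s' - f s - l * (s' - s)) <= eps * Rabs (s' - s).
Proof.
  intros H eps Heps. destruct (H eps Heps) as [d Hd]. exists d. split. apply (cond_pos d).
  intros s' Hs'. destruct (Req_dec s' s). subst. unfold Rminus; rewrite !Rplus_opp_r, Rmult_0_r, Rplus_opp_r, Rabs_R0. lra.
  assert (Hh : s' - s <> 0) by lra.
  specialize (Hd (s' - s) Hh Hs'). replace (s + (s' - s)) with s' in Hd by ring.
  replace (f s' - f s - l * (s' - s)) with (((f s' - f s) / (s' - s) - l) * (s' - s)) by (field; auto).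
  rewrite Rabs_mult. apply Rmult_le_compat_r. apply Rabs_pos. lra.
Qed.

Lemma local_ineq m phi D (g : R -> pt) s al be : smooth_family phi D ->
  derivable_pt_lim (fun u => px (g u)) s al -> derivable_pt_lim (fun u => py (g u)) s be ->
  derivable_pt_lim (fun u => pt3 (g u)) s (w2m m (px (g s)) (py (g s)) * (al * py (g s) - be * px (g s))) ->
  forall eps, 0 < eps -> exists d, 0 < d /\ forall s', Rabs (s' - s) < d ->
    Rabs ((pt3 (g s') - phi (px (g s')) (py (g s'))) - (pt3 (g s) - phi (px (g s)) (py (g s)))) <=
    normZF m D (px (g s)) (py (g s)) * norm2 (px (g s') - px (g s)) (py (g s') - py (g s)) + eps * Rabs (s' - s).
Proof.
  intros HS Hx Hy Ht eps Heps.
  set (x0 := px (g s)) in *. set (y0 := py (g s)) in *. set (t0 := pt3 (g s)) in *.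
  set (W := w2m m x0 y0) in *.
  set (fx := D (false :: nil) x0 y0). set (fy := D (true :: nil) x0 y0).
  set (X0 := XF m D x0 y0). set (Y0 := YF m D x0 y0).
  assert (HX0 : X0 = fx - W * y0) by reflexivity.
  assert (HY0 : Y0 = fy + W * x0) by reflexivity.
  set (A := Rabs X0 + Rabs Y0 + Rabs fx + Rabs fy + 1).
  set (B := Rabs al + Rabs be + 2).
  assert (HA : 0 < A) by (unfold A; pose proof (Rabs_pos X0); pose proof (Rabs_pos Y0); pose proof (Rabs_pos fx); pose proof (Rabs_pos fy); lra).
  assert (HB : 0 < B) by (unfold B; pose proof (Rabs_pos al); pose proof (Rabs_pos be); lra).
  set (e2 := Rmin 1 (eps / (2 * A))).
  assert (He2 : 0 < e2) by (apply Rmin_pos; [lra| apply Rdiv_lt_0_compat; lra]).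
  assert (He2a : e2 <= 1) by apply Rmin_l.
  assert (He2b : e2 * A <= eps / 2).
  { assert (e2 <= eps / (2 * A)) by apply Rmin_r. apply Rmult_le_compat_r with (r := A) in H; [|lra].
    replace (eps / (2 * A) * A) with (eps / 2) in H by (field; lra). exact H. }
  set (e1 := eps / (2 * B)).
  assert (He1 : 0 < e1) by (apply Rdiv_lt_0_compat; lra).
  destruct (phi_frechet phi D x0 y0 HS e1 He1) as [dp [Hdp Hphi]].
  destruct (deriv_approx _ _ _ Hx e2 He2) as [dx [Hdx Ex]].
  destruct (deriv_approx _ _ _ Hy e2 He2) as [dy [Hdy Ey]].
  destruct (deriv_approx _ _ _ Ht e2 He2) as [dt [Hdt Et]].
  exists (Rmin (Rmin dx dy) (Rmin dt (dp / B))). split.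
  { apply Rmin_pos; apply Rmin_pos; auto. apply Rdiv_lt_0_compat; lra. }
  intros s' Hs'.
  pose proof (Rmin_l (Rmin dx dy) (Rmin dt (dp / B))). pose proof (Rmin_r (Rmin dx dy) (Rmin dt (dp / B))).
  pose proof (Rmin_l dx dy). pose proof (Rmin_r dx dy). pose proof (Rmin_l dt (dp / B)). pose proof (Rmin_r dt (dp / B)).
  specialize (Ex s' ltac:(lra)). specialize (Ey s' ltac:(lra)). specialize (Et s' ltac:(lra)).
  set (h := s' - s) in *.
  set (Dx := px (g s') - x0). set (Dy := py (g s') - y0). set (Dt := pt3 (g s') - t0).
  fold x0 Dx h in Ex. fold y0 Dy h in Ey. fold t0 Dt h in Et. fold W in Et.
  set (ex := Dx - al * h). set (ey := Dy - be * h). set (et := Dt - W * (al * y0 - be * x0) * h).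
  assert (Hex : Rabs ex <= e2 * Rabs h) by exact Ex.
  assert (Hey : Rabs ey <= e2 * Rabs h) by exact Ey.
  assert (Het : Rabs et <= e2 * Rabs h) by exact Et.
  pose proof (Rabs_pos h) as Hh0.
  assert (HDx : Rabs Dx <= (Rabs al + 1) * Rabs h).
  { replace Dx with (al * h + ex) by (unfold ex; ring). eapply Rle_trans. apply Rabs_triang. rewrite Rabs_mult. nra. }
  assert (HDy : Rabs Dy <= (Rabs be + 1) * Rabs h).
  { replace Dy with (be * h + ey) by (unfold ey; ring). eapply Rle_trans. apply Rabs_triang. rewrite Rabs_mult. nra. }
  assert (HDs : Rabs Dx + Rabs Dy <= B * Rabs h) by (unfold B; lra).
  assert (Hn : norm2 Dx Dy < dp).
  { eapply Rle_lt_trans. apply norm2_le_sum. eapply Rle_lt_trans. apply HDs.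
    apply Rmult_lt_reg_r with (/ B). apply Rinv_0_lt_compat; lra.
    replace (B * Rabs h * / B) with (Rabs h) by (field; lra). replace (dp * / B) with (dp / B) by reflexivity. lra. }
  specialize (Hphi (px (g s')) (py (g s')) Hn). fold Dx Dy fx fy in Hphi.
  set (ep := phi (px (g s')) (py (g s')) - phi x0 y0 - fx * Dx - fy * Dy) in *.
  assert (Hep : Rabs ep <= eps / 2 * Rabs h).
  { eapply Rle_trans. apply Hphi. unfold e1. replace (eps / (2 * B)) with ((eps / 2) / B) by (field; lra).
    apply Rmult_le_reg_l with B. lra. replace (B * (eps / 2 / B * (Rabs Dx + Rabs Dy))) with (eps / 2 * (Rabs Dx + Rabs Dy)) by (field; lra).
    assert (0 <= eps / 2) by lra. nra. }
  replace (pt3 (g s') - phi (px (g s')) (py (g s')) - (t0 - phi x0 y0)) with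
    (- (X0 * Dx + Y0 * Dy) + (X0 - fx) * ex + (Y0 - fy) * ey + et - ep).
  2: { unfold ep, et, ex, ey, Dt. rewrite HX0, HY0. unfold Dx, Dy. ring. }
  assert (HCS : Rabs (X0 * Dx + Y0 * Dy) <= normZF m D x0 y0 * norm2 Dx Dy).
  { unfold normZF. fold X0 Y0. apply cauchy_schwarz_abs. }
  assert (T1 : Rabs ((X0 - fx) * ex) <= (Rabs X0 + Rabs fx) * (e2 * Rabs h)).
  { rewrite Rabs_mult. apply Rmult_le_compat; try apply Rabs_pos; auto.
    unfold Rminus. eapply Rle_trans. apply Rabs_triang. rewrite Rabs_Ropp. lra. }
  assert (T2 : Rabs ((Y0 - fy) * ey) <= (Rabs Y0 + Rabs fy) * (e2 * Rabs h)).
  { rewrite Rabs_mult. apply Rmult_le_compat; try apply Rabs_pos; auto.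
    unfold Rminus. eapply Rle_trans. apply Rabs_triang. rewrite Rabs_Ropp. lra. }
  assert (Hsum : (Rabs X0 + Rabs fx) * (e2 * Rabs h) + (Rabs Y0 + Rabs fy) * (e2 * Rabs h) + e2 * Rabs h <= eps / 2 * Rabs h).
  { replace ((Rabs X0 + Rabs fx) * (e2 * Rabs h) + (Rabs Y0 + Rabs fy) * (e2 * Rabs h) + e2 * Rabs h) with ((e2 * A) * Rabs h)
      by (unfold A; ring). apply Rmult_le_compat_r; auto. }
  assert (R1 : Rabs (- (X0 * Dx + Y0 * Dy) + (X0 - fx) * ex + (Y0 - fy) * ey + et - ep) <=
    Rabs (- (X0 * Dx + Y0 * Dy) + (X0 - fx) * ex + (Y0 - fy) * ey + et) + Rabs ep).
  { eapply Rle_trans. apply Rabs_triang. rewrite Rabs_Ropp. lra. }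
  pose proof (Rabs_triang (- (X0 * Dx + Y0 * Dy) + (X0 - fx) * ex + (Y0 - fy) * ey) et) as R2.
  pose proof (Rabs_triang (- (X0 * Dx + Y0 * Dy) + (X0 - fx) * ex) ((Y0 - fy) * ey)) as R3.
  pose proof (Rabs_triang (- (X0 * Dx + Y0 * Dy)) ((X0 - fx) * ex)) as R4.
  rewrite Rabs_Ropp in R4.
  clear -R1 R2 R3 R4 HCS T1 T2 Hsum Het Hep. lra.
Qed.

Lemma abs_cont_comb f1 f2 f3 h K : 0 <= K ->
  abs_cont f1 0 1 -> abs_cont f2 0 1 -> abs_cont f3 0 1 ->
  (forall u v, 0 <= u <= 1 -> 0 <= v <= 1 -> Rabs (h v - h u) <= K * (Rabs (f1 v - f1 u) + Rabs (f2 v - f2 u) + Rabs (f3 v - f3 u))) ->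
  abs_cont h 0 1.
Proof.
  intros HK H1 H2 H3 Hh eps Heps.
  set (e := eps / (3 * (K + 1))).
  assert (He : 0 < e) by (unfold e; apply Rdiv_lt_0_compat; lra).
  destruct (H1 e He) as [d1 [Hd1 A1]]. destruct (H2 e He) as [d2 [Hd2 A2]]. destruct (H3 e He) as [d3 [Hd3 A3]].
  exists (Rmin d1 (Rmin d2 d3)). split. repeat apply Rmin_pos; auto.
  intros l Hl Hs. pose proof (Rmin_l d1 (Rmin d2 d3)). pose proof (Rmin_r d1 (Rmin d2 d3)).
  pose proof (Rmin_l d2 d3). pose proof (Rmin_r d2 d3).
  specialize (A1 l Hl ltac:(lra)). specialize (A2 l Hl ltac:(lra)). specialize (A3 l Hl ltac:(lra)).
  assert (sum_incr h l <= K * (sum_incr f1 l + sum_incr f2 l + sum_incr f3 l)).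
  { rewrite !sum_incr_sumP. rewrite <- !sumP_plus, <- sumP_scal. apply sumP_le.
    intros p Hp. destruct (ordered_In _ _ _ _ Hl Hp) as [? [? ?]]. apply Hh; lra. }
  assert (K * (sum_incr f1 l + sum_incr f2 l + sum_incr f3 l) <= K * (3 * e)).
  { apply Rmult_le_compat_l; lra. }
  assert (K * (3 * e) < eps).
  { unfold e. replace (K * (3 * (eps / (3 * (K + 1))))) with (eps * (K / (K + 1))) by (field; lra).
    assert (K / (K + 1) < 1). { apply Rmult_lt_reg_r with (K + 1). lra. field_simplify; lra. }
    nra. }
  lra.
Qed.

Lemma length_point g L s : length_le g L -> 0 <= s <= 1 ->
  norm2 (px (g s) - px (g 0)) (py (g s) - py (g 0)) <= L.
Proof.
  intros HL Hs. specialize (HL (s :: 1 :: nil)). simpl in HL.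
  assert (0 <= s /\ s <= 1 /\ 1 = 1) by lra. specialize (HL H).
  pose proof (norm2_ge0 (px (g 1) - px (g s)) (py (g 1) - py (g s))). lra.
Qed.

Lemma ball_lemma m phi D C (p q : pt) g L M : 1 <= m -> 0 <= C -> smooth_family phi D ->
  (forall w x y, length w = 1%nat -> Rabs (D w x y) <= C * rpow (norm2 x y) (2 * m + 1)) ->
  hcurve m p q g -> length_le g L -> 0 <= M ->
  (forall w1 w2, norm2 (w1 - px p) (w2 - py p) <= L -> normZF m D w1 w2 <= M) ->
  pt3 q - phi (px q) (py q) >= pt3 p - phi (px p) (py p) - M * L.
Proof.
  intros hm HC HS hD1 [[Ax [Ay [At [N [HN Hd]]]]] [Hg0 Hg1]] HL HM HZ.
  set (F := fun u => pt3 (g u) - phi (px (g u)) (py (g u))).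
  assert (HL0 : 0 <= L) by (pose proof (length_point g L 0 HL ltac:(lra)); pose proof (norm2_ge0 (px (g 0) - px (g 0)) (py (g 0) - py (g 0))); lra).
  set (R0 := Rabs (px p) + Rabs (py p) + L).
  assert (Hbox : forall u, 0 <= u <= 1 -> Rabs (px (g u)) <= R0 /\ Rabs (py (g u)) <= R0).
  { intros u Hu. pose proof (length_point g L u HL Hu). rewrite Hg0 in H.
    pose proof (norm2_abs1 (px (g u) - px p) (py (g u) - py p)). pose proof (norm2_abs2 (px (g u) - px p) (py (g u) - py p)).
    pose proof (Rabs_triang_inv (px (g u)) (px p)). pose proof (Rabs_triang_inv (py (g u)) (py p)).
    pose proof (Rabs_pos (px p)). pose proof (Rabs_pos (py p)). unfold R0. split; lra. }
  set (K := C * (PP m (2 * R0) * (2 * R0))).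
  assert (HK : 0 <= K).
  { unfold K. apply Rmult_le_pos; auto. apply Rmult_le_pos. apply rpow_ge0. unfold R0.
    pose proof (Rabs_pos (px p)). pose proof (Rabs_pos (py p)). lra. }
  assert (HAC : abs_cont F 0 1).
  { apply (abs_cont_comb (fun u => pt3 (g u)) (fun u => px (g u)) (fun u => py (g u)) F (K + 1)); auto. lra.
    intros u v Hu Hv. unfold F.
    destruct (Hbox u Hu) as [B1 B2]. destruct (Hbox v Hv) as [B3 B4].
    pose proof (phi_lip m phi D C R0 _ _ _ _ hm HC HS hD1 B1 B2 B3 B4). fold K in H.
    replace (pt3 (g v) - phi (px (g v)) (py (g v)) - (pt3 (g u) - phi (px (g u)) (py (g u)))) with
      ((pt3 (g v) - pt3 (g u)) - (phi (px (g v)) (py (g v)) - phi (px (g u)) (py (g u)))) by ring.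
    set (a := pt3 (g v) - pt3 (g u)) in *. set (b := phi (px (g v)) (py (g v)) - phi (px (g u)) (py (g u))) in *.
    assert (Rabs (a - b) <= Rabs a + Rabs b).
    { unfold Rminus. eapply Rle_trans. apply Rabs_triang. rewrite Rabs_Ropp. lra. }
    pose proof (Rabs_pos a). pose proof (Rabs_pos (px (g v) - px (g u))).
    pose proof (Rabs_pos (py (g v) - py (g u))).
    assert (0 <= K * Rabs a) by (apply Rmult_le_pos; auto).
    assert (E : (K + 1) * (Rabs a + Rabs (px (g v) - px (g u)) + Rabs (py (g v) - py (g u))) =
      K * Rabs a + Rabs a + K * (Rabs (px (g v) - px (g u)) + Rabs (py (g v) - py (g u))) + Rabs (px (g v) - px (g u)) + Rabs (py (g v) - py (g u))) by ring.
    rewrite E. lra. }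
  assert (HA := lemmaA g F M L HM HAC).
  assert (H : Rabs (F 1 - F 0) <= M * L).
  { apply HA; auto. exists N. split; auto.
    intros s Hs HNs eps Heps. destruct (Hd s Hs HNs) as [al [be [D1 [D2 D3]]]].
    destruct (local_ineq m phi D g s al be HS D1 D2 D3 eps Heps) as [d [Hdp Hloc]].
    exists d. split; auto. intros s' Hs' Hss'. specialize (Hloc s' Hss'). unfold F.
    eapply Rle_trans. apply Hloc. apply Rplus_le_compat_r. apply Rmult_le_compat_r. apply norm2_ge0.
    apply HZ. rewrite <- Hg0. apply length_point; auto. lra. }
  unfold F in H. rewrite Hg0, Hg1 in H.
  pose proof (Rle_abs (- (pt3 q - phi (px q) (py q) - (pt3 p - phi (px p) (py p))))). rewrite Rabs_Ropp in H0. lra.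
Qed.

Lemma fR_mono m a b : 1 <= m -> 0 <= a <= b -> fR m a <= fR m b.
Proof.
  intros hm Hab. unfold fR. pose proof (rpow_mono a b (2 * m) ltac:(lra) Hab). pose proof (rpow_ge0 a (2*m)).
  apply Rmult_le_compat; auto. nra. nra.
Qed.

Lemma fR_root m tau : 1 <= m -> 0 < tau -> fR m (Rpower tau (/ (2 * m + 2))) = tau.
Proof.
  intros hm Ht. set (d := Rpower tau (/ (2 * m + 2))).
  assert (Hd : 0 < d) by (unfold d, Rpower; apply exp_pos).
  unfold fR. rewrite rpow_eq by auto.
  replace (d * d) with (Rpower d 2).
  2: { replace 2 with (INR 2) by (simpl; ring). rewrite Rpower_pow by auto. simpl; ring. }
  rewrite <- Rpower_plus. unfold d. rewrite Rpower_mult.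
  replace (/ (2 * m + 2) * (2 * m + 2)) with 1 by (field; lra). apply Rpower_1; auto.
Qed.

Lemma loop_choice m rb tau : 1 <= m -> 0 < rb ->
  exists d, 0 <= d /\ (0 < d \/ tau = 0) /\
    Rabs (tau / (fR m rb - fR m ((1 + d / rb) * rb))) * (2 * rb + d) <= 3 * d /\
    PP m rb * (d * d) <= Rabs tau /\ (d <= rb \/ fR m d <= Rabs tau).
Proof.
  intros hm Hrb. assert (HP : 0 < PP m rb) by (apply rpow_pos; auto).
  destruct (Rle_dec (Rabs tau) (fR m rb)) as [Hs|Hl].
  - set (d := sqrt (Rabs tau / PP m rb)).
    assert (Hd0 : 0 <= d) by apply sqrt_pos.
    assert (Hdd : d * d = Rabs tau / PP m rb) by (apply sqrt_sqrt; apply Rdiv_le_0_compat; [apply Rabs_pos|auto]).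
    assert (Hdrb : d <= rb).
    { apply sq_le_le. lra. rewrite Hdd. unfold fR in Hs. fold (PP m rb) in Hs.
      apply Rmult_le_reg_l with (PP m rb); auto. field_simplify; [|lra]. lra. }
    exists d. split; auto.
    destruct (Req_dec tau 0) as [Ht0|Ht0].
    + assert (d = 0). { unfold d. rewrite Ht0, Rabs_R0. unfold Rdiv. rewrite Rmult_0_l. apply sqrt_0. }
      split. right; auto. rewrite H, Ht0. unfold Rdiv. rewrite !Rmult_0_l, Rabs_R0, Rmult_0_l. split. lra.
      split. rewrite Rmult_0_r. lra. left; lra.
    + assert (Hdp : 0 < d).
      { destruct Hd0; auto. exfalso. assert (Rabs tau / PP m rb = 0) by (rewrite <- Hdd, <- H; ring).
        assert (0 < Rabs tau) by (apply Rabs_pos_lt; auto). unfold Rdiv in H0.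
        assert (0 < Rabs tau * / PP m rb) by (apply Rmult_lt_0_compat; auto; apply Rinv_0_lt_compat; auto). lra. }
      split. left; auto.
      replace ((1 + d / rb) * rb) with (rb + d) by (field; lra).
      assert (Hgap : PP m rb * (2 * rb * d) <= fR m (rb + d) - fR m rb).
      { unfold fR. fold (PP m rb) (PP m (rb + d)). pose proof (PP_mono m rb (rb + d) hm ltac:(lra)).
        assert (PP m rb * ((rb + d) * (rb + d)) <= PP m (rb + d) * ((rb + d) * (rb + d))) by (apply Rmult_le_compat_r; nra).
        nra. }
      assert (Hgp : 0 < PP m rb * (2 * rb * d)) by (apply Rmult_lt_0_compat; auto; nra).
      split; [|split].
      * unfold Rdiv. rewrite Rabs_mult, Rabs_inv by lra. rewrite (Rabs_left (fR m rb - fR m (rb + d))) by lra.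
        replace (- (fR m rb - fR m (rb + d))) with (fR m (rb + d) - fR m rb) by ring.
        assert (Rabs tau = PP m rb * (d * d)) by (rewrite Hdd; field; lra).
        rewrite H. apply Rmult_le_reg_r with (fR m (rb + d) - fR m rb). lra.
        replace (PP m rb * (d * d) * / (fR m (rb + d) - fR m rb) * (2 * rb + d) * (fR m (rb + d) - fR m rb))
          with (PP m rb * (d * d) * (2 * rb + d)) by (field; lra).
        assert (PP m rb * (d * d) * (2 * rb + d) <= 3 * d * (PP m rb * (2 * rb * d))).
        { assert (0 <= PP m rb * (d * d)) by nra. 
          replace (3 * d * (PP m rb * (2 * rb * d))) with (PP m rb * (d * d) * (6 * rb)) by ring.
          apply Rmult_le_compat_l; lra. }
        assert (3 * d * (PP m rb * (2 * rb * d)) <= 3 * d * (fR m (rb + d) - fR m rb)) by (apply Rmult_le_compat_l; lra).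
        lra.
      * rewrite Hdd. right. field. lra.
      * left; auto.
  - assert (Hpos : 0 < Rabs tau).
    { assert (0 <= fR m rb) by (unfold fR; apply Rmult_le_pos; [apply rpow_ge0| nra]). lra. }
    set (d := Rpower (Rabs tau) (/ (2 * m + 2))).
    assert (Hd : 0 < d) by (unfold d, Rpower; apply exp_pos).
    assert (HfR : fR m d = Rabs tau) by (apply fR_root; auto).
    assert (Hdrb : rb < d).
    { destruct (Rlt_le_dec rb d); auto. exfalso. pose proof (fR_mono m d rb hm ltac:(lra)). lra. }
    exists d. split. lra. split. left; auto.
    replace ((1 + d / rb) * rb) with (rb + d) by (field; lra).
    assert (Hgap : fR m d <= fR m (rb + d) - fR m rb).
    { unfold fR. pose proof (rpow_mono d (rb + d) (2 * m) ltac:(lra) ltac:(lra)).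
      pose proof (rpow_mono rb (rb + d) (2 * m) ltac:(lra) ltac:(lra)).
      pose proof (rpow_ge0 d (2*m)). pose proof (rpow_ge0 rb (2*m)).
      assert (rpow rb (2 * m) * (rb * rb) <= rpow (rb + d) (2 * m) * (rb * rb)) by (apply Rmult_le_compat_r; nra).
      assert (rpow d (2 * m) * (d * d) <= rpow (rb + d) (2 * m) * (d * d)) by (apply Rmult_le_compat_r; nra).
      assert (rpow (rb + d) (2 * m) * (d * d) <= rpow (rb + d) (2 * m) * ((rb + d) * (rb + d)) - rpow (rb + d) (2 * m) * (rb * rb)).
      { rewrite <- Rmult_minus_distr_l. apply Rmult_le_compat_l. lra. nra. }
      lra. }
    split; [|split].
    + unfold Rdiv. rewrite Rabs_mult, Rabs_inv by lra. rewrite (Rabs_left (fR m rb - fR m (rb + d))) by lra.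
      replace (- (fR m rb - fR m (rb + d))) with (fR m (rb + d) - fR m rb) by ring.
      assert (Rabs tau * / (fR m (rb + d) - fR m rb) <= 1).
      { apply Rmult_le_reg_r with (fR m (rb + d) - fR m rb). lra. rewrite Rmult_assoc, Rinv_l by lra. lra. }
      assert (0 <= Rabs tau * / (fR m (rb + d) - fR m rb)).
      { apply Rmult_le_pos. apply Rabs_pos. left; apply Rinv_0_lt_compat; lra. }
      assert (Rabs tau * / (fR m (rb + d) - fR m rb) * (2 * rb + d) <= 1 * (2 * rb + d)) by (apply Rmult_le_compat_r; lra).
      lra.
    + rewrite <- HfR. unfold fR. fold (PP m d). apply Rmult_le_compat_r. nra. apply PP_mono; auto; lra.
    + right; lra.
Qed.

Lemma ode_facts m x y t c : integral_curve_X m (x, y, t) c ->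
  (forall w, px (c w) = x + w) /\ (forall w, py (c w) = y) /\
  (forall w, derivable_pt_lim (fun u => pt3 (c u)) w (w2m m (x + w) y * y)) /\ pt3 (c 0) = t.
Proof.
  intros [Hc0 Hd].
  assert (E1 : forall w, px (c w) = x + w).
  { intros w. assert (Rabs ((px (c w) - w) - (px (c 0) - 0)) <= 0 * Rabs (w - 0)).
    { apply (lip_any (fun u => px (c u) - u) (fun _ => 0)). intros s.
      replace 0 with (1 - 1) by ring. apply D_minus. apply (Hd s). apply D_id.
      intros; rewrite Rabs_R0; lra. }
    rewrite Rmult_0_l in H. rewrite Hc0 in H. unfold px at 2 in H. simpl in H.
    pose proof (Rle_abs (px (c w) - w - (x - 0))). pose proof (Rle_abs (- (px (c w) - w - (x - 0)))).
    rewrite Rabs_Ropp in H1. lra. }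
  assert (E2 : forall w, py (c w) = y).
  { intros w. assert (Rabs (py (c w) - py (c 0)) <= 0 * Rabs (w - 0)).
    { apply (lip_any (fun u => py (c u)) (fun _ => 0)). intros s. apply (Hd s).
      intros; rewrite Rabs_R0; lra. }
    rewrite Rmult_0_l in H. rewrite Hc0 in H. unfold py at 2 in H. simpl in H.
    pose proof (Rle_abs (py (c w) - y)). pose proof (Rle_abs (- (py (c w) - y))).
    rewrite Rabs_Ropp in H1. lra. }
  split; auto. split; auto. split.
  - intros w. destruct (Hd w) as [_ [_ H]]. rewrite E1, E2 in H. exact H.
  - rewrite Hc0. reflexivity.
Qed.

Lemma height_lower m phi D x y T S kappa : smooth_family phi D ->
  (forall w, derivable_pt_lim T w (w2m m (x + w) y * y)) ->
  (forall w, 0 <= w <= S -> kappa <= - XF m D (x + w) y) ->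
  forall w, 0 <= w <= S -> (T w - phi (x + w) y) - (T 0 - phi (x + 0) y) >= kappa * w.
Proof.
  intros [H0 [Hx [Hy Hc]]] HT Hk w Hw.
  destruct (Req_dec w 0). subst. lra.
  set (Hf := fun u => T u - D nil (1 * u + x) y).
  assert (Hd : forall u, derivable_pt_lim Hf u (- XF m D (x + u) y)).
  { intros u. unfold Hf, XF. replace (- (D (false :: nil) (x + u) y - w2m m (x + u) y * y)) with
      (w2m m (x + u) y * y - D (false :: nil) (1 * u + x) y * 1) by (replace (1 * u + x) with (x + u) by ring; ring).
    apply D_minus. apply HT. apply (deriv_lin (fun v => D nil v y)). apply Hx. }
  destruct (MVT_cor2 Hf (fun u => - XF m D (x + u) y) 0 w ltac:(lra) (fun c _ => Hd c)) as [c [Hc1 Hc2]].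
  unfold Hf in Hc1. rewrite <- H0. replace (x + w) with (1 * w + x) by ring. replace (x + 0) with (1 * 0 + x) by ring.
  rewrite Hc1. specialize (Hk c ltac:(lra)). nra.
Qed.

Lemma amgm_q u v al be c : 0 < al -> 0 < be -> c * c <= 4 * al * be -> 0 <= v ->
  c * u * v <= al * u * u + be * v * v.
Proof.
  intros Ha Hb Hc Hv.
  assert (A1 : 0 <= (2 * al * u - c * v) * (2 * al * u - c * v)) by (apply Rle_0_sqr).
  assert (A2 : 0 <= (4 * al * be - c * c) * (v * v)) by (apply Rmult_le_pos; [lra| apply Rle_0_sqr]).
  assert (E : 4 * al * (al * u * u + be * v * v - c * u * v) = (2 * al * u - c * v) * (2 * al * u - c * v) + (4 * al * be - c * c) * (v * v)) by ring.
  assert (A3 : 0 <= 4 * al * (al * u * u + be * v * v - c * u * v)) by lra.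
  assert (A4 : 0 <= al * u * u + be * v * v - c * u * v).
  { apply Rmult_le_reg_l with (4 * al). lra. lra. }
  lra.
Qed.

Lemma finalB1 a P eps lp LZ P2 sig sbar tau d r h0 M :
  0 < a -> 0 < P -> 0 < eps -> 0 <= LZ -> 1 <= P2 ->
  sbar = eps * a / P -> 0 <= sig <= sbar -> (0 < d -> sig = sbar) -> 0 <= d ->
  P * (d * d) <= P2 * tau -> 0 <= tau -> 0 < r -> r < lp * (sig + 5 * d) ->
  M <= 9 / 8 * a + LZ * P * r ->
  0 < lp -> lp <= 1 / 32 -> lp * lp * 1600 * P2 <= eps -> lp * lp * LZ <= 1 / 64 -> lp * lp * LZ * P2 <= 1 / 400 ->
  eps <= 1 -> 0 < h0 ->
  M * r < h0 + a * sig / 4 + tau.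
Proof.
  intros Ha HP He HLZ HP2 Hsb Hsig Hds Hd Hdt Ht Hr Hrl HM Hl1 Hl2 Hl3 Hl4 Hl5 He1 Hh0.
  assert (HMr : M * r <= 9 / 8 * a * r + LZ * P * (r * r)).
  { assert (M * r <= (9 / 8 * a + LZ * P * r) * r) by (apply Rmult_le_compat_r; lra). lra. }
  assert (Hr2 : r * r <= 2 * (lp * lp) * (sig * sig) + 50 * (lp * lp) * (d * d)).
  { assert (r * r <= (lp * (sig + 5 * d)) * (lp * (sig + 5 * d))) by (apply Rmult_le_compat; lra).
    assert (0 <= (lp * lp) * ((sig - 5 * d) * (sig - 5 * d))) by (apply Rmult_le_pos; apply Rle_0_sqr).
    assert (2 * (lp * lp) * (sig * sig) + 50 * (lp * lp) * (d * d) - (lp * (sig + 5 * d)) * (lp * (sig + 5 * d))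
      = (lp * lp) * ((sig - 5 * d) * (sig - 5 * d))) by ring. lra. }
  assert (HPs : P * (sig * sig) <= eps * a * sig).
  { assert (P * sig <= eps * a) by (rewrite Hsb in Hsig; destruct Hsig as [_ Hs];
      apply Rmult_le_compat_l with (r := P) in Hs; [|lra]; replace (P * (eps * a / P)) with (eps * a) in Hs by (field; lra); exact Hs).
    nra. }
  assert (T2a : LZ * P * (2 * (lp * lp) * (sig * sig)) <= a * sig / 32).
  { replace (LZ * P * (2 * (lp * lp) * (sig * sig))) with (2 * (lp * lp * LZ) * (P * (sig * sig))) by ring.
    assert (0 <= P * (sig * sig)) by nra.
    assert (2 * (lp * lp * LZ) * (P * (sig * sig)) <= 2 * (1/64) * (eps * a * sig)).
    { apply Rmult_le_compat; nra. }
    assert (eps * a * sig <= a * sig) by nra. nra. }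
  assert (T2b : LZ * P * (50 * (lp * lp) * (d * d)) <= tau / 8).
  { replace (LZ * P * (50 * (lp * lp) * (d * d))) with (50 * (lp * lp * LZ) * (P * (d * d))) by ring.
    assert (0 <= P * (d * d)) by nra. assert (0 <= lp * lp * LZ) by nra.
    assert (50 * (lp * lp * LZ) * (P * (d * d)) <= 50 * (lp * lp * LZ) * (P2 * tau)) by (apply Rmult_le_compat_l; nra).
    nra. }
  assert (T2 : LZ * P * (r * r) <= a * sig / 32 + tau / 8).
  { assert (LZ * P * (r * r) <= LZ * P * (2 * (lp * lp) * (sig * sig) + 50 * (lp * lp) * (d * d))) by
      (apply Rmult_le_compat_l; nra). nra. }
  destruct (Req_dec d 0) as [Hd0|Hd0].
  - subst d. assert (9 / 8 * a * r <= 9 / 8 * a * (lp * sig)) by (apply Rmult_le_compat_l; nra).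
    assert (0 <= a * sig) by (apply Rmult_le_pos; lra).
    assert (a * (lp * sig) <= a * sig / 32).
    { replace (a * (lp * sig)) with (lp * (a * sig)) by ring. replace (a * sig / 32) with (1/32 * (a * sig)) by field.
      apply Rmult_le_compat_r; lra. }
    assert (T2' : LZ * P * (r * r) <= a * sig / 32 + tau / 8) by exact T2.
    clear - HMr T2' H H1 H0 Hh0 Ht. lra.
  - assert (Hdp : 0 < d) by lra. specialize (Hds Hdp). subst sig.
    assert (T1 : 9 / 8 * a * r <= 9 / 8 * a * (lp * sbar) + 6 * lp * a * d).
    { assert (9 / 8 * a * r <= 9 / 8 * a * (lp * (sbar + 5 * d))) by (apply Rmult_le_compat_l; lra).
      assert (0 <= lp * a * d) by (repeat apply Rmult_le_pos; lra). lra. }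
    assert (T1b : 6 * lp * a * d <= eps / (16 * P) * a * a + P / (4 * P2) * d * d).
    { apply amgm_q; try lra. apply Rdiv_lt_0_compat; lra. apply Rdiv_lt_0_compat; lra.
      replace (4 * (eps / (16 * P)) * (P / (4 * P2))) with (eps / (16 * P2)) by (field; lra).
      apply Rmult_le_reg_r with (16 * P2). lra. replace (eps / (16 * P2) * (16 * P2)) with eps by (field; lra). nra. }
    assert (E1 : eps / (16 * P) * a * a = a * sbar / 16) by (rewrite Hsb; field; lra).
    assert (E2 : P / (4 * P2) * d * d <= tau / 4).
    { replace (P / (4 * P2) * d * d) with ((P * (d * d)) / (4 * P2)) by (field; lra).
      apply Rmult_le_reg_r with (4 * P2). lra. replace (P * (d * d) / (4 * P2) * (4 * P2)) with (P * (d * d)) by (field; lra). nra. }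
    assert (0 <= a * sbar) by (apply Rmult_le_pos; lra).
    assert (a * (lp * sbar) <= a * sbar / 32).
    { replace (a * (lp * sbar)) with (lp * (a * sbar)) by ring. replace (a * sbar / 32) with (1/32 * (a * sbar)) by field.
      apply Rmult_le_compat_r; lra. }
    clear - HMr T2 T1 T1b E1 E2 H H0 Hh0 Ht Hl1 Hl2. lra.
Qed.

Lemma finalB2 m C1 rho lp sig sbar tau d r h0 a :
  1 <= m -> 0 <= C1 -> 0 < rho -> 0 <= sig <= sbar -> sbar <= rho / 4 -> 0 <= d ->
  rho / 4 < r -> r < lp * (sig + 5 * d) -> 0 < lp -> lp <= 1 / 60 -> lp * C1 <= 1 / 20 ->
  (d <= 3 * rho / 2 \/ fR m d <= tau) -> 0 <= tau -> 0 < h0 -> 0 <= a ->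
  C1 * (PP m (6 * r) * (6 * r)) * r < h0 + a * sig / 4 + tau.
Proof.
  intros hm HC1 Hrho Hsig Hsb Hd Hr Hrl Hl1 Hl2 Hl3 Hor Ht Hh0 Ha.
  assert (A1 : lp * sig <= r / 60).
  { assert (lp * sig <= 1/60 * sig) by (apply Rmult_le_compat_r; lra). lra. }
  assert (A2 : 59 / 60 * r < 5 * lp * d) by lra.
  assert (A3 : 11 * r < d).
  { assert (5 * lp * d <= 5 * (1/60) * d) by (apply Rmult_le_compat_r; lra). lra. }
  assert (HfR : fR m d <= tau) by (destruct Hor; auto; lra).
  assert (A4 : PP m (6 * r) * (6 * r) <= PP m d * d) by (apply PPr_mono; auto; lra).
  assert (A5 : r <= 6 * lp * d) by lra.
  assert (HP : 0 <= PP m (6 * r) * (6 * r)) by (apply Rmult_le_pos; [apply rpow_ge0| lra]).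
  assert (HPd : 0 <= PP m d * d) by (apply Rmult_le_pos; [apply rpow_ge0| lra]).
  assert (C1 * (PP m (6 * r) * (6 * r)) * r <= C1 * (PP m d * d) * (6 * lp * d)).
  { apply Rmult_le_compat; try lra. apply Rmult_le_pos; auto. apply Rmult_le_compat_l; auto. }
  assert (E : C1 * (PP m d * d) * (6 * lp * d) = 6 * (lp * C1) * fR m d) by (unfold fR, PP; ring).
  assert (0 <= fR m d) by (unfold fR; apply Rmult_le_pos; [apply rpow_ge0| nra]).
  assert (6 * (lp * C1) * fR m d <= 6 * (1/20) * fR m d) by (apply Rmult_le_compat_r; lra).
  assert (0 <= a * sig) by (apply Rmult_le_pos; lra).
  lra.
Qed.

Lemma lp_facts lp eps0 P2 LZ : 0 < lp -> 0 < eps0 -> eps0 <= 1/8 -> 1 <= P2 -> 0 <= LZ ->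
  lp * P2 <= eps0 / 2000 -> lp <= eps0 / 2000 -> lp * (LZ * P2) <= eps0 / 2000 ->
  lp * lp * 1600 * P2 <= eps0 /\ lp * lp * LZ <= 1 / 64 /\ lp * lp * LZ * P2 <= 1 / 400.
Proof.
  intros H1 H2 H3 H4 H5 H6 H7 H8.
  assert (A : lp * (lp * P2) <= (eps0 / 2000) * (eps0 / 2000)) by (apply Rmult_le_compat; nra).
  assert (B : lp * LZ <= lp * (LZ * P2)) by (apply Rmult_le_compat_l; nra).
  assert (C : lp * (lp * LZ) <= (eps0 / 2000) * (eps0 / 2000)) by (apply Rmult_le_compat; nra).
  assert (E : lp * (lp * (LZ * P2)) <= (eps0 / 2000) * (eps0 / 2000)) by (apply Rmult_le_compat; nra).
  split; [|split]; nra.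
Qed.

Lemma rpow_ge1 b e : 1 <= b -> 0 <= e -> 1 <= rpow b e.
Proof.
  intros Hb He. rewrite rpow_eq by lra. rewrite <- (Rpower_O b) by lra. apply Rle_Rpower; lra.
Qed.

Lemma norm2_x0 w : norm2 w 0 = Rabs w.
Proof. unfold norm2. replace (w * w + 0 * 0) with (Rsqr w) by (unfold Rsqr; ring). apply sqrt_Rsqr_abs. Qed.

Lemma ZF_near m phi D C rho z1 z2 w1 w2 : 1 <= m -> 0 <= C -> 0 < rho -> smooth_family phi D ->
  (forall w x y, length w = 2%nat -> Rabs (D w x y) <= C * rpow (norm2 x y) (2 * m)) ->
  rho / 2 <= norm2 z1 z2 <= 3 * rho / 2 -> norm2 (w1 - z1) (w2 - z2) <= rho / 4 ->
  Rabs (normZF m D w1 w2 - normZF m D z1 z2) <= (4 * rpow 4 (2 * m) * (C + 16 * m + 1)) * PP m rho * norm2 (w1 - z1) (w2 - z2) /\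
  Rabs (XF m D w1 w2 - XF m D z1 z2) <= (4 * rpow 4 (2 * m) * (C + 16 * m + 1)) * PP m rho * norm2 (w1 - z1) (w2 - z2).
Proof.
  intros hm HC Hr HS hD2 [Hz1 Hz2] Hw.
  set (n := norm2 (w1 - z1) (w2 - z2)) in *.
  assert (Hn0 : 0 <= n) by apply norm2_ge0.
  pose proof (norm2_abs1 z1 z2). pose proof (norm2_abs2 z1 z2).
  pose proof (norm2_abs1 (w1 - z1) (w2 - z2)). pose proof (norm2_abs2 (w1 - z1) (w2 - z2)). fold n in H1, H2.
  pose proof (Rabs_triang_inv w1 z1). pose proof (Rabs_triang_inv w2 z2).
  assert (B1 : Rabs z1 <= 2 * rho) by lra. assert (B2 : Rabs z2 <= 2 * rho) by lra.
  assert (B3 : Rabs w1 <= 2 * rho) by lra. assert (B4 : Rabs w2 <= 2 * rho) by lra.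
  assert (N1 : rho / 4 <= norm2 z1 z2) by lra.
  assert (N2 : rho / 4 <= norm2 w1 w2).
  { pose proof (norm2_rev_tri w1 w2 z1 z2) as R1. fold n in R1.
    pose proof (Rle_abs (- (norm2 w1 w2 - norm2 z1 z2))) as R2. rewrite Rabs_Ropp in R2. lra. }
  assert (HK : KXc m C (2 * rho) (rho / 4) = rpow 4 (2 * m) * PP m rho * (C + 16 * m + 1)).
  { unfold KXc. replace (2 * (2 * rho)) with (4 * rho) by ring. unfold PP. rewrite rpow_mul by lra.
    field. lra. }
  assert (Hs : Rabs (w1 - z1) + Rabs (w2 - z2) <= 2 * n) by lra.
  assert (HKp : 0 <= KXc m C (2 * rho) (rho / 4)).
  { rewrite HK. apply Rmult_le_pos. apply Rmult_le_pos; apply rpow_ge0. lra. }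
  destruct (XF_lip m phi D C (2 * rho) (rho / 4) z1 z2 w1 w2 hm HC ltac:(lra) HS hD2 B1 B2 B3 B4 N1 N2) as [X1 _].
  pose proof (ZF_lip m phi D C (2 * rho) (rho / 4) z1 z2 w1 w2 hm HC ltac:(lra) HS hD2 B1 B2 B3 B4 N1 N2) as Z1.
  assert (KXc m C (2 * rho) (rho / 4) * (Rabs (w1 - z1) + Rabs (w2 - z2)) <= KXc m C (2 * rho) (rho / 4) * (2 * n)) by
    (apply Rmult_le_compat_l; auto).
  rewrite HK in *. split; nra.
Qed.

Lemma g_rep (c : R -> pt) x y sbar u : (forall w, px (c w) = x + w) -> (forall w, py (c w) = y) ->
  0 <= u ->
  gamma_curve c sbar u = (x + Rmin u sbar, y, pt3 (c (Rmin u sbar)) + Rmax 0 (u - sbar)).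
Proof.
  intros E1 E2 Hu. unfold gamma_curve. destruct (Rle_dec u sbar).
  - rewrite Rmin_left, Rmax_left by lra. rewrite <- (E1 u), <- (E2 u).
    destruct (c u) as [[p1 p2] p3]. unfold px, py, pt3; simpl. f_equal. ring.
  - rewrite Rmin_right, Rmax_right by lra. rewrite E1, E2. reflexivity.
Qed.

Theorem theorem5p2 (m : R) (hm : 1 <= m)
  (phi : R -> R -> R) (D : list bool -> R -> R -> R)
  (hsmooth : smooth_family phi D)
  (C : R) (hC : 0 < C)
  (hD3 : forall w x y, length w = 3%nat ->
           Rabs (D w x y) <= C * rpow (norm2 x y) (2 * m - 1))
  (hD2 : forall w x y, length w = 2%nat ->
           Rabs (D w x y) <= C * rpow (norm2 x y) (2 * m))
  (hD1 : forall w x y, length w = 1%nat ->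
           Rabs (D w x y) <= C * rpow (norm2 x y) (2 * m + 1)) :
  exists eps0 lam, 0 < eps0 /\ 0 < lam /\
    forall x y t,
      - XF m D x y > / 2 * normZF m D x y ->
      epi phi (x, y, t) ->
      forall c : R -> pt, integral_curve_X m (x, y, t) c ->
      let sbar := eps0 * normZF m D x y / w2m m x y in
      let g := gamma_curve c sbar in
      (forall s, 0 <= s -> epi phi (g s)) /\
      (forall s, 0 < s -> forall q,
         in_ball_diam m (g s) lam (fun p => exists u, 0 <= u <= s /\ p = g u) q ->
         epi phi q).
Proof.
  set (C1 := 2 * C + 2).
  set (P2 := rpow 2 (2 * m)). set (P4 := rpow 4 (2 * m)).
  set (LZ := 4 * P4 * (C + 16 * m + 1)).
  set (eps0 := / (8 * (C1 + LZ + 1))).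
  set (Kd := 2000 * P2 * ((LZ + 1) * (C1 + 1))).
  set (lp := eps0 / Kd).
  assert (HP2 : 1 <= P2) by (apply rpow_ge1; lra).
  assert (HP4 : 1 <= P4) by (apply rpow_ge1; lra).
  assert (HC1 : 0 < C1) by (unfold C1; lra).
  assert (HLZ : 0 < LZ) by (unfold LZ; assert (0 < C + 16 * m + 1) by lra; apply Rmult_lt_0_compat; lra).
  assert (He0 : 0 < eps0) by (unfold eps0; apply Rinv_0_lt_compat; lra).
  assert (He0d : eps0 * (8 * (C1 + LZ + 1)) = 1) by (unfold eps0; field; lra).
  assert (He0C1 : eps0 * C1 <= 1 / 8) by nra.
  assert (He0LZ : eps0 * LZ <= 1 / 8) by nra.
  assert (He01 : eps0 <= 1 / 8) by nra.
  assert (Hden : 1 <= (LZ + 1) * (C1 + 1)) by nra.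
  assert (HKd : 0 < Kd) by (unfold Kd; nra).
  assert (Hlp : 0 < lp) by (unfold lp; apply Rdiv_lt_0_compat; lra).
  assert (Hlpd : lp * (2000 * P2 * ((LZ + 1) * (C1 + 1))) = eps0) by (unfold lp; fold Kd; field; apply Rgt_not_eq; exact HKd).
  assert (HlpP2 : lp * P2 <= eps0 / 2000).
  { assert (lp * P2 * 2000 <= lp * (2000 * P2 * ((LZ + 1) * (C1 + 1)))) by nra. lra. }
  assert (Hlp1 : lp <= eps0 / 2000) by nra.
  assert (HlpLZ : lp * (LZ * P2) <= eps0 / 2000).
  { assert (lp * (LZ * P2) * 2000 <= lp * (2000 * P2 * ((LZ + 1) * (C1 + 1)))) by nra. lra. }
  assert (HlpC1 : lp * C1 <= eps0 / 2000).
  { assert (C1 <= (LZ + 1) * (C1 + 1)) by nra.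
    assert ((LZ + 1) * (C1 + 1) <= P2 * ((LZ + 1) * (C1 + 1))) by nra.
    assert (lp * 2000 * C1 <= lp * 2000 * (P2 * ((LZ + 1) * (C1 + 1)))) by (apply Rmult_le_compat_l; lra).
    lra. }
  exists eps0, (lp / 16). split; auto. split. lra.
  intros x y t Hxf Hepi c Hc sbar g.
  assert (HS := hsmooth).
  set (a := normZF m D x y) in *.
  set (rho := norm2 x y).
  set (Pr := PP m rho).
  assert (Ha : 0 < a).
  { pose proof (norm2_abs1 (XF m D x y) (YF m D x y)). fold (normZF m D x y) a in H.
    pose proof (Rle_abs (- XF m D x y)). rewrite Rabs_Ropp in H0. lra. }
  assert (HZb := ZF_bound m D C x y hm ltac:(lra) hD1). fold a rho in HZb. fold (PP m rho) Pr in HZb. fold C1 in HZb.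
  assert (Hrho : 0 < rho).
  { destruct (norm2_ge0 x y) as [H|H]. auto. exfalso.
    assert (HP0 : Pr = 0) by (unfold Pr, PP, rho; rewrite <- H; apply rpow_0).
    rewrite HP0 in HZb. rewrite Rmult_0_l, Rmult_0_r in HZb. lra. }
  assert (HPr : 0 < Pr) by (apply rpow_pos; auto).
  assert (Hsb : sbar = eps0 * a / Pr) by reflexivity.
  assert (Hsb0 : 0 < sbar) by (rewrite Hsb; apply Rdiv_lt_0_compat; nra).
  assert (Hsb1 : sbar <= rho / 8).
  { rewrite Hsb. apply Rmult_le_reg_r with Pr; auto. replace (eps0 * a / Pr * Pr) with (eps0 * a) by (field; apply Rgt_not_eq; lra).
    assert (eps0 * a <= eps0 * (C1 * (Pr * rho))) by (apply Rmult_le_compat_l; lra).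
    assert (eps0 * (C1 * (Pr * rho)) = (eps0 * C1) * (Pr * rho)) by ring.
    assert ((eps0 * C1) * (Pr * rho) <= 1/8 * (Pr * rho)) by (apply Rmult_le_compat_r; nra).
    nra. }
  destruct (ode_facts m x y t c Hc) as [E1 [E2 [ET Et0]]].
  set (T := fun w => pt3 (c w)).
  assert (Hgr : forall u, 0 <= u -> g u = (x + Rmin u sbar, y, T (Rmin u sbar) + Rmax 0 (u - sbar))).
  { intros u Hu. apply g_rep; auto. }
  assert (Hnseg : forall w, 0 <= w <= sbar -> rho / 2 <= norm2 (x + w) y <= 3 * rho / 2 /\ norm2 (x + w - x) (y - y) = w).
  { intros w Hw. replace (x + w - x) with w by ring. replace (y - y) with 0 by ring. rewrite norm2_x0, Rabs_right by lra.
    pose proof (norm2_rev_tri (x + w) y x y). replace (x + w - x) with w in H by ring. replace (y - y) with 0 in H by ring.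
    rewrite norm2_x0, (Rabs_right w) in H by lra. fold rho in H.
    pose proof (Rle_abs (norm2 (x + w) y - rho)). pose proof (Rle_abs (- (norm2 (x + w) y - rho))). rewrite Rabs_Ropp in H1.
    split; [split|]; lra. }
  assert (HZn : forall z1 z2 w1 w2, rho / 2 <= norm2 z1 z2 <= 3 * rho / 2 -> norm2 (w1 - z1) (w2 - z2) <= rho / 4 ->
     Rabs (normZF m D w1 w2 - normZF m D z1 z2) <= LZ * Pr * norm2 (w1 - z1) (w2 - z2) /\ Rabs (XF m D w1 w2 - XF m D z1 z2) <= LZ * Pr * norm2 (w1 - z1) (w2 - z2)).
  { intros. apply (ZF_near m phi D C rho); auto; lra. }
  assert (HXF : forall w, 0 <= w <= sbar -> a / 4 <= - XF m D (x + w) y).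
  { intros w Hw. destruct (Hnseg w Hw) as [_ Hn].
    assert (Hrx : rho / 2 <= norm2 x y <= 3 * rho / 2) by (fold rho; lra).
    destruct (HZn x y (x + w) y Hrx ltac:(rewrite Hn; lra)) as [_ HX]. rewrite Hn in HX.
    assert (LZ * Pr * w <= LZ * Pr * sbar) by (apply Rmult_le_compat_l; [apply Rmult_le_pos; lra| lra]).
    assert (LZ * Pr * sbar = (eps0 * LZ) * a) by (rewrite Hsb; field; apply Rgt_not_eq; lra).
    assert ((eps0 * LZ) * a <= 1 / 8 * a) by (apply Rmult_le_compat_r; lra).
    pose proof (Rle_abs (XF m D (x + w) y - XF m D x y)) as RR. clear -Hxf HX H H0 H1 RR Ha. lra. }
  set (h0 := t - phi x y).
  assert (Hh0 : 0 < h0) by (unfold h0; unfold epi, pt3, px, py in Hepi; simpl in Hepi; lra).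
  assert (Hheight : forall u, 0 <= u -> pt3 (g u) - phi (px (g u)) (py (g u)) >= h0 + a / 4 * Rmin u sbar + Rmax 0 (u - sbar)).
  { intros u Hu. rewrite (Hgr u Hu). unfold px, py, pt3; cbn [fst snd].
    assert (Hm : 0 <= Rmin u sbar <= sbar) by (split; [apply Rmin_glb; lra| apply Rmin_r]).
    pose proof (height_lower m phi D x y T sbar (a / 4) HS ET HXF (Rmin u sbar) Hm).
    unfold T in H at 2. rewrite Et0 in H. replace (x + 0) with x in H by ring. unfold h0.
    pose proof (Rmax_l 0 (u - sbar)). lra. }
  split.
  { intros s Hs. unfold epi. pose proof (Hheight s Hs).
    assert (0 <= a / 4 * Rmin s sbar) by (apply Rmult_le_pos; [lra| apply Rmin_glb; lra]).
    pose proof (Rmax_l 0 (s - sbar)). lra. }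
  intros s Hs q [r [[g' [L [Hg' [HL HLr]]]] [pa [pb [[u [Hu Hpa]] [[v [Hv Hpb]] [r' [Hr' Hall]]]]]]]].
  assert (HL0 : 0 <= L).
  { pose proof (length_point g' L 0 HL ltac:(lra)). pose proof (norm2_ge0 (px (g' 0) - px (g' 0)) (py (g' 0) - py (g' 0))). lra. }
  assert (Hr0 : 0 < r) by lra.
  set (sig := Rmin s sbar). set (taus := Rmax 0 (s - sbar)).
  assert (Hsig : 0 <= sig <= sbar) by (split; [apply Rmin_glb; lra| apply Rmin_r]).
  assert (Hsig0 : 0 < sig) by (apply Rmin_glb_lt; lra).
  assert (Htaus : 0 <= taus) by apply Rmax_l.
  set (u' := Rmin u sbar). set (v' := Rmin v sbar).
  set (o1 := Rmax 0 (u - sbar)). set (o2 := Rmax 0 (v - sbar)).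
  assert (Hu' : 0 <= u' <= sig).
  { split. apply Rmin_glb; lra. unfold u', sig, Rmin. destruct (Rle_dec u sbar); destruct (Rle_dec s sbar); lra. }
  assert (Hv' : 0 <= v' <= sig).
  { split. apply Rmin_glb; lra. unfold v', sig, Rmin. destruct (Rle_dec v sbar); destruct (Rle_dec s sbar); lra. }
  assert (Ho1 : 0 <= o1 <= taus).
  { split. apply Rmax_l. unfold o1, taus, Rmax. destruct (Rle_dec 0 (u - sbar)); destruct (Rle_dec 0 (s - sbar)); lra. }
  assert (Ho2 : 0 <= o2 <= taus).
  { split. apply Rmax_l. unfold o2, taus, Rmax. destruct (Rle_dec 0 (v - sbar)); destruct (Rle_dec 0 (s - sbar)); lra. }
  assert (Htau : Rabs (o2 - o1) <= taus) by (apply Rabs_le; split; lra).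
  set (rb := norm2 (x + v') y).
  assert (Hrb : rho / 2 <= rb <= 3 * rho / 2) by (apply (Hnseg v'); lra).
  destruct (loop_choice m rb (o2 - o1) hm ltac:(lra)) as [d [Hd0 [Hdor [HTh [Hdd Hdalt]]]]].
  destruct (connect m x y T u' v' o1 o2 d hm ET ltac:(fold rb; lra) Hd0 ltac:(destruct Hdor; [left|right]; lra)) as [G [HG HGL]].
  assert (Hpa' : pa = (x + u', y, T u' + o1)) by (rewrite Hpa; apply Hgr; lra).
  assert (Hpb' : pb = (x + v', y, T v' + o2)) by (rewrite Hpb; apply Hgr; lra).
  rewrite <- Hpa', <- Hpb' in HG.
  specialize (Hall G HG _ HGL). fold rb in Hall.
  assert (Hlen : Rabs (v' - u') <= sig) by (apply Rabs_le; split; lra).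
  assert (Hrl : r < lp * (sig + 5 * d)).
  { assert (r / (lp / 16) < 16 * (sig + 5 * d)) by lra.
    apply Rmult_lt_compat_r with (r := lp / 16) in H; [|lra].
    replace (r / (lp / 16) * (lp / 16)) with r in H by (field; lra). lra. }
  assert (HPrb : Pr <= P2 * PP m rb).
  { unfold Pr, PP, P2. replace rho with (2 * (rho / 2)) at 1 by field. rewrite rpow_mul by lra.
    apply Rmult_le_compat_l. apply rpow_ge0. apply rpow_mono; lra. }
  assert (Hdd' : Pr * (d * d) <= P2 * taus).
  { assert (Pr * (d * d) <= P2 * PP m rb * (d * d)) by (apply Rmult_le_compat_r; [apply Rmult_le_pos; lra| lra]).
    assert (P2 * PP m rb * (d * d) <= P2 * taus).
    { rewrite Rmult_assoc. apply Rmult_le_compat_l; lra. }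
    lra. }
  assert (Hdsig : 0 < d -> sig = sbar).
  { intros Hdp. assert (0 < PP m rb) by (apply rpow_pos; lra).
    assert (0 < PP m rb * (d * d)) by (apply Rmult_lt_0_compat; [lra| apply Rmult_lt_0_compat; lra]).
    assert (0 < taus) by lra. unfold taus, Rmax in H1. unfold sig, Rmin.
    destruct (Rle_dec 0 (s - sbar)); destruct (Rle_dec s sbar); lra. }
  assert (Hdalt' : d <= 3 * rho / 2 \/ fR m d <= taus) by (destruct Hdalt; [left| right]; lra).
  assert (Hgs : g s = (x + sig, y, T sig + taus)) by (apply Hgr; lra).
  assert (Hhs := Hheight s ltac:(lra)). fold sig taus in Hhs.
  assert (Hzs : rho / 2 <= norm2 (x + sig) y <= 3 * rho / 2) by (apply (Hnseg sig); lra).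
  unfold epi.
  destruct (Rle_dec r (rho / 4)) as [Hsmall|Hbig].
  - set (M := 9 / 8 * a + LZ * Pr * r).
    assert (HM0 : 0 <= M) by (unfold M; assert (0 <= LZ * Pr * r) by (repeat apply Rmult_le_pos; lra); lra).
    assert (HZs : normZF m D (x + sig) y <= a + LZ * Pr * sig).
    { destruct (Hnseg sig ltac:(lra)) as [_ Hn].
      assert (Hrx : rho / 2 <= norm2 x y <= 3 * rho / 2) by (fold rho; lra).
      destruct (HZn x y (x + sig) y Hrx ltac:(rewrite Hn; lra)) as [HZ _]. rewrite Hn in HZ.
      pose proof (Rle_abs (normZF m D (x + sig) y - normZF m D x y)). fold a in HZ, H. lra. }
    assert (HZs' : LZ * Pr * sig <= a / 8).
    { assert (LZ * Pr * sig <= LZ * Pr * sbar) by (apply Rmult_le_compat_l; [apply Rmult_le_pos; lra| lra]).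
      assert (LZ * Pr * sbar = (eps0 * LZ) * a) by (rewrite Hsb; field; apply Rgt_not_eq; lra).
      assert ((eps0 * LZ) * a <= 1 / 8 * a) by (apply Rmult_le_compat_r; lra). lra. }
    assert (Hball := ball_lemma m phi D C (g s) q g' L M hm ltac:(lra) HS hD1 Hg' HL HM0).
    assert (Hq : pt3 q - phi (px q) (py q) >= pt3 (g s) - phi (px (g s)) (py (g s)) - M * L).
    { apply Hball. intros w1 w2 Hw. rewrite Hgs in Hw. unfold px, py in Hw; cbn [fst snd] in Hw.
      destruct (HZn (x + sig) y w1 w2 Hzs ltac:(lra)) as [HZ _].
      pose proof (Rle_abs (normZF m D w1 w2 - normZF m D (x + sig) y)).
      assert (LZ * Pr * norm2 (w1 - (x + sig)) (w2 - y) <= LZ * Pr * r) by (apply Rmult_le_compat_l; [apply Rmult_le_pos; lra| lra]).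
      unfold M. lra. }
    assert (HMr : M * L <= M * r) by (apply Rmult_le_compat_l; lra).
    assert (Hfin := finalB1 a Pr eps0 lp LZ P2 sig sbar taus d r h0 M Ha HPr He0 ltac:(lra) HP2 Hsb Hsig Hdsig Hd0 Hdd' Htaus Hr0 Hrl
      ltac:(unfold M; lra)).
    destruct (lp_facts lp eps0 P2 LZ Hlp He0 He01 HP2 ltac:(lra) HlpP2 Hlp1 HlpLZ) as [F1 [F2 F3]].
    assert (Hfin' : M * r < h0 + a * sig / 4 + taus).
    { apply Hfin; try lra. }
    clear Hfin. lra.
  - set (M := C1 * (PP m (6 * r) * (6 * r))).
    assert (HM0 : 0 <= M) by (unfold M; apply Rmult_le_pos; [lra| apply Rmult_le_pos; [apply rpow_ge0| lra]]).
    assert (Hball := ball_lemma m phi D C (g s) q g' L M hm ltac:(lra) HS hD1 Hg' HL HM0).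
    assert (Hq : pt3 q - phi (px q) (py q) >= pt3 (g s) - phi (px (g s)) (py (g s)) - M * L).
    { apply Hball. intros w1 w2 Hw. rewrite Hgs in Hw. unfold px, py in Hw; cbn [fst snd] in Hw.
      pose proof (ZF_bound m D C w1 w2 hm ltac:(lra) hD1). fold C1 in H.
      assert (Hnw : norm2 w1 w2 <= 6 * r).
      { pose proof (norm2_triangle (x + sig) y (w1 - (x + sig)) (w2 - y)).
        replace (x + sig + (w1 - (x + sig))) with w1 in H0 by ring. replace (y + (w2 - y)) with w2 in H0 by ring.
        pose proof (norm2_triangle x y sig 0). replace (y + 0) with y in H1 by ring. rewrite norm2_x0, Rabs_right in H1 by lra.
        fold rho in H1. apply Rnot_le_lt in Hbig. lra. }
      pose proof (PPr_mono m (norm2 w1 w2) (6 * r) hm ltac:(split; [apply norm2_ge0| lra])).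
      unfold M. assert (C1 * (PP m (norm2 w1 w2) * norm2 w1 w2) <= C1 * (PP m (6 * r) * (6 * r))) by (apply Rmult_le_compat_l; lra).
      lra. }
    assert (HMr : M * L <= M * r) by (apply Rmult_le_compat_l; lra).
    assert (Hfin : M * r < h0 + a * sig / 4 + taus).
    { unfold M. apply (finalB2 m C1 rho lp sig sbar taus d r h0 a hm ltac:(lra) Hrho Hsig ltac:(lra) Hd0 ltac:(lra) Hrl Hlp
        ltac:(lra) ltac:(lra) Hdalt' Htaus Hh0 ltac:(lra)). }
    lra.
Qed.
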